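(* Fix $\gamma\neq0$. Consider the subclass of equations $i\psi_t+\psi_{xx}+|\psi|^\gamma\psi+V\psi=0$ whose potentials depend only on $t$, i.e. $V=V(t)$ is an arbitrary smooth complex-valued function of $t$. The intersection of the maximal Lie invariance algebras of all equations in this subclass is $\langle M,\ G(1),\ G(t)\rangle$. Explicitly, this is $\langle M,\ \partial_x,\ t\partial_x+\tfrac12 xM\rangle$.
   Context: $M=i(\psi\partial_\psi-\psi^*\partial_{\psi^*})$ and $G(\chi)=\chi\partial_x+\tfrac12\chi_t xM$. Lie symmetries are vector fields on the space of $(t,x,\psi,\psi^* )$, with $\psi^*$ treated as an independent variable. *)

(* Defs.v *)
From Stdlib Require Import Reals List.
From Coquelicot Require Import Coquelicot.
Open Scope R_scope.

(* Real form of the equation.  psi = u + i v, V = V1 + i V2 (V1, V2 : R -> R). *)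
(* Working in real coordinates (t,x,u,v) is equivalent to the (psi, psi^* )  *)
(* formalism, where the coefficient of d_{psi^*} is the conjugate of that of *)
(* d_psi.  |psi|^gamma = (u^2+v^2)^(gamma/2); the equation lives on          *)
(* Omega = { u^2 + v^2 > 0 } (needed for gamma < 0).                         *)

Definition Omega (u v : R) : Prop := 0 < u ^ 2 + v ^ 2.

Definition smooth1 (f : R -> R) : Prop := forall (n : nat) (t : R), ex_derive_n f n t.

Definition pd2 (i : nat) (f : R -> R -> R) : R -> R -> R :=
  match i with
  | O => fun t x => Derive (fun s => f s x) t
  | _ => fun t x => Derive (fun s => f t s) x
  end.
Definition ex_pd2 (i : nat) (f : R -> R -> R) (t x : R) : Prop :=
  match i with
  | O => ex_derive (fun s => f s x) t
  | _ => ex_derive (fun s => f t s) x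
  end.
Fixpoint iter_pd2 (ds : list nat) (f : R -> R -> R) : R -> R -> R :=
  match ds with nil => f | i :: ds' => pd2 i (iter_pd2 ds' f) end.
Definition smooth2 (f : R -> R -> R) : Prop :=
  forall (ds : list nat) (t x : R),
    (forall i, ex_pd2 i (iter_pd2 ds f) t x) /\
    continuous (fun p : R * R => iter_pd2 ds f (fst p) (snd p)) (t, x).

Definition fun4 := R -> R -> R -> R -> R.
Definition pd4 (i : nat) (f : fun4) : fun4 :=
  match i with
  | O => fun t x u v => Derive (fun s => f s x u v) t
  | 1%nat => fun t x u v => Derive (fun s => f t s u v) x
  | 2%nat => fun t x u v => Derive (fun s => f t x s v) u
  | _ => fun t x u v => Derive (fun s => f t x u s) v
  end.
Definition ex_pd4 (i : nat) (f : fun4) (t x u v : R) : Prop :=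
  match i with
  | O => ex_derive (fun s => f s x u v) t
  | 1%nat => ex_derive (fun s => f t s u v) x
  | 2%nat => ex_derive (fun s => f t x s v) u
  | _ => ex_derive (fun s => f t x u s) v
  end.
Fixpoint iter_pd4 (ds : list nat) (f : fun4) : fun4 :=
  match ds with nil => f | i :: ds' => pd4 i (iter_pd4 ds' f) end.
Definition smooth_on_Omega (f : fun4) : Prop :=
  forall (ds : list nat) (t x u v : R), Omega u v ->
    (forall i, ex_pd4 i (iter_pd4 ds f) t x u v) /\
    continuous (fun p : R * R * R * R =>
                  iter_pd4 ds f (fst (fst (fst p))) (snd (fst (fst p)))
                                (snd (fst p)) (snd p)) (t, x, u, v).

(* Vector fields  Q = tau d_t + xi d_x + eta d_u + theta d_v  on (t,x,u,v) *)
Record VF := mkVF { vf_tau : fun4; vf_xi : fun4; vf_eta : fun4; vf_theta : fun4 }.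

Definition smooth_VF (Q : VF) : Prop :=
  smooth_on_Omega (vf_tau Q) /\ smooth_on_Omega (vf_xi Q) /\
  smooth_on_Omega (vf_eta Q) /\ smooth_on_Omega (vf_theta Q).

(* Second-order jet coordinates (those the equations involve), indexed as    *)
(*  0:t 1:x 2:u 3:v 4:u_t 5:u_x 6:v_t 7:v_x 8:u_xx 9:v_xx                     *)
Definition Jet := nat -> R.
Definition jupd (k : nat) (j : Jet) (s : R) : Jet :=
  fun i => if Nat.eqb i k then s else j i.
Definition pdJ (k : nat) (E : Jet -> R) (j : Jet) : R :=
  Derive (fun s => E (jupd k j s)) (j k).

(* The equation  i psi_t + psi_xx + |psi|^gamma psi + V(t) psi = 0  in real form:
   real part E1, imaginary part E2. *)
Definition absg (gamma : R) (j : Jet) : R := Rpower (j 2%nat ^ 2 + j 3%nat ^ 2) (gamma / 2).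
Definition NLS_E1 (gamma : R) (V1 V2 : R -> R) (j : Jet) : R :=
  - j 6%nat + j 8%nat + (absg gamma j + V1 (j O)) * j 2%nat - V2 (j O) * j 3%nat.
Definition NLS_E2 (gamma : R) (V1 V2 : R -> R) (j : Jet) : R :=
  j 4%nat + j 9%nat + (absg gamma j + V1 (j O)) * j 3%nat + V2 (j O) * j 2%nat.

Definition d_t (g : R -> R -> R) (t x : R) : R := Derive (fun s => g s x) t.
Definition d_x (g : R -> R -> R) (t x : R) : R := Derive (fun y => g t y) x.

Definition along (f : fun4) (U W : R -> R -> R) : R -> R -> R :=
  fun t x => f t x (U t x) (W t x).

Definition jet2 (U W : R -> R -> R) (t x : R) : Jet :=
  fun i => match i with
  | O => t | 1%nat => x | 2%nat => U t x | 3%nat => W t x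
  | 4%nat => d_t U t x | 5%nat => d_x U t x
  | 6%nat => d_t W t x | 7%nat => d_x W t x
  | 8%nat => d_x (d_x U) t x | _ => d_x (d_x W) t x
  end.

(* Prolongation coefficients (Olver's formula) evaluated along the section:
   total derivatives along the section are ordinary partial derivatives of
   the composed functions.  Z is the dependent variable (U or W) whose
   coefficient is eta_Z. *)
Section Prol.
Variables (Q : VF) (U W : R -> R -> R).
Definition tauS := along (vf_tau Q) U W.
Definition xiS := along (vf_xi Q) U W.
Definition prol_t (etaZ : fun4) (Z : R -> R -> R) : R -> R -> R := fun t x =>
  d_t (along etaZ U W) t x - d_t Z t x * d_t tauS t x - d_x Z t x * d_t xiS t x.
Definition prol_x (etaZ : fun4) (Z : R -> R -> R) : R -> R -> R := fun t x =>
  d_x (along etaZ U W) t x - d_t Z t x * d_x tauS t x - d_x Z t x * d_x xiS t x.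
Definition prol_xx (etaZ : fun4) (Z : R -> R -> R) : R -> R -> R := fun t x =>
  d_x (prol_x etaZ Z) t x - d_x (d_t Z) t x * d_x tauS t x
  - d_x (d_x Z) t x * d_x xiS t x.
Definition prol2 (k : nat) (t x : R) : R :=
  match k with
  | O => tauS t x
  | 1%nat => xiS t x
  | 2%nat => along (vf_eta Q) U W t x
  | 3%nat => along (vf_theta Q) U W t x
  | 4%nat => prol_t (vf_eta Q) U t x
  | 5%nat => prol_x (vf_eta Q) U t x
  | 6%nat => prol_t (vf_theta Q) W t x
  | 7%nat => prol_x (vf_theta Q) W t x
  | 8%nat => prol_xx (vf_eta Q) U t x
  | _ => prol_xx (vf_theta Q) W t x
  end.
Definition prol2_apply (E : Jet -> R) (t x : R) : R :=
  sum_f_R0 (fun k => prol2 k t x * pdJ k E (jet2 U W t x)) 9.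
End Prol.

(* Infinitesimal invariance criterion: Q^(2) E = 0 on the solution manifold
   E1 = E2 = 0 of the 2-jet space (every 2-jet point over Omega is the 2-jet
   of some smooth section at some point). *)
Definition in_max_Lie_alg (gamma : R) (V1 V2 : R -> R) (Q : VF) : Prop :=
  smooth_VF Q /\
  forall (U W : R -> R -> R) (t x : R),
    smooth2 U -> smooth2 W -> Omega (U t x) (W t x) ->
    NLS_E1 gamma V1 V2 (jet2 U W t x) = 0 ->
    NLS_E2 gamma V1 V2 (jet2 U W t x) = 0 ->
    prol2_apply Q U W (NLS_E1 gamma V1 V2) t x = 0 /\
    prol2_apply Q U W (NLS_E2 gamma V1 V2) t x = 0.

(* M = i(psi d_psi - psi^* d_psi^* ) = -v d_u + u d_v *)
Definition vfM : VF :=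
  mkVF (fun _ _ _ _ => 0) (fun _ _ _ _ => 0) (fun _ _ _ v => - v) (fun _ _ u _ => u).
(* G(chi) = chi d_x + 1/2 chi_t x M *)
Definition vfG (chi : R -> R) : VF :=
  mkVF (fun _ _ _ _ => 0) (fun t _ _ _ => chi t)
       (fun t x _ v => / 2 * Derive chi t * x * (- v))
       (fun t x u _ => / 2 * Derive chi t * x * u).

Definition vf_comb (c1 c2 c3 : R) (A B C : VF) : VF :=
  mkVF (fun t x u v => c1 * vf_tau A t x u v + c2 * vf_tau B t x u v + c3 * vf_tau C t x u v)
       (fun t x u v => c1 * vf_xi A t x u v + c2 * vf_xi B t x u v + c3 * vf_xi C t x u v)
       (fun t x u v => c1 * vf_eta A t x u v + c2 * vf_eta B t x u v + c3 * vf_eta C t x u v)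
       (fun t x u v => c1 * vf_theta A t x u v + c2 * vf_theta B t x u v + c3 * vf_theta C t x u v).

Definition vf_eq_on_Omega (P Q : VF) : Prop :=
  forall t x u v, Omega u v ->
    vf_tau P t x u v = vf_tau Q t x u v /\ vf_xi P t x u v = vf_xi Q t x u v /\
    vf_eta P t x u v = vf_eta Q t x u v /\ vf_theta P t x u v = vf_theta Q t x u v.

(* Main.v *)
Require Import Defs.
From Stdlib Require Import Reals Lra Lia List FunctionalExtensionality.
From Coquelicot Require Import Coquelicot.
Open Scope R_scope.


Lemma ballR (x e y : R) : ball x e y <-> Rabs (y - x) < e.
Proof. unfold ball; simpl; unfold AbsRing_ball, abs, minus, plus, opp; simpl. tauto. Qed.

Lemma ball4 (a0 a1 a2 a3 p0 p1 p2 p3 e : R) :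
  Rabs (p0 - a0) < e -> Rabs (p1 - a1) < e -> Rabs (p2 - a2) < e -> Rabs (p3 - a3) < e ->
  @ball (prod_UniformSpace (prod_UniformSpace (prod_UniformSpace R_UniformSpace R_UniformSpace) R_UniformSpace) R_UniformSpace) (a0, a1, a2, a3) e (p0, p1, p2, p3).
Proof.
  intros. repeat split; apply ballR; auto.
Qed.

Lemma Omega_near (u v : R) : Omega u v ->
  exists e, 0 < e /\ forall u' v', Rabs (u' - u) < e -> Rabs (v' - v) < e -> Omega u' v'.
Proof.
  unfold Omega; intros H.
  destruct (Req_dec u 0) as [Hu|Hu].
  - subst. assert (Hv : v <> 0) by (intro; subst; lra).
    exists (Rabs v). split; [apply Rabs_pos_lt; auto|].
    intros u' v' _ H2. assert (v' <> 0).
    { intro; subst. rewrite Rminus_0_l, Rabs_Ropp in H2. lra. }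
    assert (0 < v' ^ 2) by (apply pow2_gt_0; auto). nra.
  - exists (Rabs u). split; [apply Rabs_pos_lt; auto|].
    intros u' v' H2 _. assert (u' <> 0).
    { intro; subst. rewrite Rminus_0_l, Rabs_Ropp in H2. lra. }
    assert (0 < u' ^ 2) by (apply pow2_gt_0; auto). nra.
Qed.

Lemma locally_R (x : R) (P : R -> Prop) :
  (exists e, 0 < e /\ forall y, Rabs (y - x) < e -> P y) -> locally x P.
Proof.
  intros [e [He H]]. exists (mkposreal e He). intros y Hy. apply H. apply ballR in Hy. exact Hy.
Qed.

Lemma locally_R_inv (x : R) (P : R -> Prop) :
  locally x P -> exists e, 0 < e /\ forall y, Rabs (y - x) < e -> P y.
Proof.
  intros [e H]. exists e. split. apply cond_pos. intros y Hy. apply H. apply ballR. exact Hy.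
Qed.

Lemma cont_eps (c : R -> R) (s0 : R) : continuous c s0 ->
  forall e, 0 < e -> exists d, 0 < d /\ forall s, Rabs (s - s0) < d -> Rabs (c s - c s0) < e.
Proof.
  intros Hc e He. apply filterlim_locally with (eps := mkposreal e He) in Hc.
  apply locally_R_inv in Hc. destruct Hc as [d [Hd H]]. exists d; split; [exact Hd|].
  intros s Hs. specialize (H s Hs). apply ballR in H. exact H.
Qed.

Lemma Omega_curve (cu cv : R -> R) (s0 : R) :
  continuous cu s0 -> continuous cv s0 -> Omega (cu s0) (cv s0) ->
  locally s0 (fun s => Omega (cu s) (cv s)).
Proof.
  intros Hu Hv HO. destruct (Omega_near _ _ HO) as [e [He HN]].
  destruct (cont_eps _ _ Hu e He) as [d1 [Hd1 H1]].
  destruct (cont_eps _ _ Hv e He) as [d2 [Hd2 H2]].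
  apply locally_R. exists (Rmin d1 d2). split. apply Rmin_pos; auto.
  intros y Hy. apply HN. apply H1. eapply Rlt_le_trans; [exact Hy| apply Rmin_l].
  apply H2. eapply Rlt_le_trans; [exact Hy| apply Rmin_r].
Qed.

Lemma Omega_loc_u (u v : R) : Omega u v -> locally u (fun s => Omega s v).
Proof.
  intros H. apply (Omega_curve (fun s => s) (fun _ => v) u); auto.
  apply continuous_id. apply continuous_const.
Qed.
Lemma Omega_loc_v (u v : R) : Omega u v -> locally v (fun s => Omega u s).
Proof.
  intros H. apply (Omega_curve (fun _ => u) (fun s => s) v); auto.
  apply continuous_const. apply continuous_id.
Qed.

Lemma mvt1 (F : R -> R) (a b : R) :
  (forall z, Rmin a b <= z <= Rmax a b -> ex_derive F z) ->
  exists z, Rmin a b <= z <= Rmax a b /\ F b - F a = Derive F z * (b - a).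
Proof.
  intros H. destruct (MVT_gen F a b (Derive F)) as [z [Hz Heq]].
  - intros x Hx. apply Derive_correct. apply H. lra.
  - intros x Hx. apply continuity_pt_filterlim. apply (ex_derive_continuous (K:=R_AbsRing) (V:=R_NormedModule)). apply H. exact Hx.
  - exists z. split; auto.
Qed.

Lemma between_abs (a b z : R) : Rmin a b <= z <= Rmax a b -> Rabs (z - a) <= Rabs (b - a).
Proof.
  intros [H1 H2]. unfold Rmin, Rmax in *. destruct (Rle_dec a b);
  unfold Rabs; repeat destruct Rcase_abs; lra.
Qed.

Lemma approx_prod (G g q d e : R) : Rabs (G - g) < e -> Rabs (q - d) < e -> e <= 1 ->
  Rabs (G * q - g * d) <= e * (Rabs d + 1 + Rabs g).
Proof.
  intros H1 H2 He.
  replace (G * q - g * d) with ((G - g) * q + g * (q - d)) by ring.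
  eapply Rle_trans; [apply Rabs_triang|]. rewrite !Rabs_mult.
  assert (Rabs q <= Rabs d + 1).
  { replace q with (d + (q - d)) by ring. eapply Rle_trans; [apply Rabs_triang|]. lra. }
  assert (0 <= Rabs (G - g)) by apply Rabs_pos. assert (0 <= Rabs q) by apply Rabs_pos.
  assert (0 <= Rabs g) by apply Rabs_pos. assert (0 <= Rabs (q-d)) by apply Rabs_pos.
  assert (Rabs (G - g) * Rabs q <= e * (Rabs d + 1)).
  { apply Rmult_le_compat; lra. }
  assert (Rabs g * Rabs (q - d) <= Rabs g * e).
  { apply Rmult_le_compat_l; lra. }
  nra.
Qed.

Definition pt4cont (g : fun4) (t x u v : R) : Prop :=
  continuous (fun p : R * R * R * R =>
                  g (fst (fst (fst p))) (snd (fst (fst p))) (snd (fst p)) (snd p)) (t, x, u, v).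

Lemma cont4_eps (g : fun4) t x u v : pt4cont g t x u v ->
  forall e, 0 < e -> exists d, 0 < d /\ forall p0 p1 p2 p3,
    Rabs (p0 - t) < d -> Rabs (p1 - x) < d -> Rabs (p2 - u) < d -> Rabs (p3 - v) < d ->
    Rabs (g p0 p1 p2 p3 - g t x u v) < e.
Proof.
  intros Hc e He. unfold pt4cont in Hc.
  apply filterlim_locally with (eps := mkposreal e He) in Hc.
  destruct Hc as [d Hd]. exists d. split. apply cond_pos.
  intros p0 p1 p2 p3 H0 H1 H2 H3.
  specialize (Hd (p0, p1, p2, p3) (ball4 _ _ _ _ _ _ _ _ _ H0 H1 H2 H3)).
  apply ballR in Hd. exact Hd.
Qed.

Lemma deriv_eps (c : R -> R) s0 d : is_derive c s0 d ->
  forall e, 0 < e -> exists dl, 0 < dl /\ forall h, h <> 0 -> Rabs h < dl ->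
    Rabs ((c (s0 + h) - c s0) / h - d) < e.
Proof.
  intros H e He. apply is_derive_Reals in H. destruct (H e He) as [dl Hdl].
  exists dl. split. apply cond_pos. intros h Hh1 Hh2. apply Hdl; auto.
Qed.

Lemma deriv_cont_eps (c : R -> R) s0 d : is_derive c s0 d ->
  forall e, 0 < e -> exists dl, 0 < dl /\ forall h, Rabs h < dl ->
    Rabs (c (s0 + h) - c s0) < e.
Proof.
  intros H e He.
  assert (Hc : continuous c s0).
  { apply (ex_derive_continuous (K:=R_AbsRing) (V:=R_NormedModule)). exists d. exact H. }
  destruct (cont_eps c s0 Hc e He) as [dl [Hdl Hd]]. exists dl. split; auto.
  intros h Hh. apply Hd. replace (s0 + h - s0) with h by ring. exact Hh.
Qed.

Lemma Rabs4 (a b c d : R) : Rabs (a + b + c + d) <= Rabs a + Rabs b + Rabs c + Rabs d.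
Proof.
  eapply Rle_trans; [apply Rabs_triang|]. apply Rplus_le_compat_r.
  eapply Rle_trans; [apply Rabs_triang|]. apply Rplus_le_compat_r.
  apply Rabs_triang.
Qed.

Section Chain.
Variable f : fun4.
Hypothesis Hex : forall t x u v i, Omega u v -> ex_pd4 i f t x u v.

Lemma chain4 (c0 c1 c2 c3 : R -> R) (s0 d0 d1 d2 d3 : R) :
  (forall i, pt4cont (pd4 i f) (c0 s0) (c1 s0) (c2 s0) (c3 s0)) ->
  Omega (c2 s0) (c3 s0) ->
  is_derive c0 s0 d0 -> is_derive c1 s0 d1 -> is_derive c2 s0 d2 -> is_derive c3 s0 d3 ->
  is_derive (fun s => f (c0 s) (c1 s) (c2 s) (c3 s)) s0
    (pd4 0 f (c0 s0) (c1 s0) (c2 s0) (c3 s0) * d0 + pd4 1 f (c0 s0) (c1 s0) (c2 s0) (c3 s0) * d1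
     + pd4 2 f (c0 s0) (c1 s0) (c2 s0) (c3 s0) * d2 + pd4 3 f (c0 s0) (c1 s0) (c2 s0) (c3 s0) * d3).
Proof.
  intros Hc HO D0 D1 D2 D3.
  set (a0 := c0 s0) in *. set (a1 := c1 s0) in *. set (a2 := c2 s0) in *. set (a3 := c3 s0) in *.
  set (g0 := pd4 0 f a0 a1 a2 a3). set (g1 := pd4 1 f a0 a1 a2 a3).
  set (g2 := pd4 2 f a0 a1 a2 a3). set (g3 := pd4 3 f a0 a1 a2 a3).
  apply is_derive_Reals. intros eps Heps.
  set (K := (Rabs d0 + 1 + Rabs g0) + (Rabs d1 + 1 + Rabs g1) + (Rabs d2 + 1 + Rabs g2) + (Rabs d3 + 1 + Rabs g3)).
  assert (HK : 1 <= K).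
  { unfold K. pose proof (Rabs_pos d0). pose proof (Rabs_pos g0). pose proof (Rabs_pos d1).
    pose proof (Rabs_pos g1). pose proof (Rabs_pos d2). pose proof (Rabs_pos g2).
    pose proof (Rabs_pos d3). pose proof (Rabs_pos g3). lra. }
  set (e' := Rmin 1 (eps / (2 * K))).
  assert (He'1 : e' <= 1) by apply Rmin_l.
  assert (He'2 : e' <= eps / (2 * K)) by apply Rmin_r.
  assert (He' : 0 < e').
  { apply Rmin_pos. lra. apply Rdiv_lt_0_compat; lra. }
  destruct (Omega_near _ _ HO) as [eO [HeO HN]].
  destruct (cont4_eps _ _ _ _ _ (Hc 0%nat) e' He') as [dg0 [Hdg0 G0]].
  destruct (cont4_eps _ _ _ _ _ (Hc 1%nat) e' He') as [dg1 [Hdg1 G1]].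
  destruct (cont4_eps _ _ _ _ _ (Hc 2%nat) e' He') as [dg2 [Hdg2 G2]].
  destruct (cont4_eps _ _ _ _ _ (Hc 3%nat) e' He') as [dg3 [Hdg3 G3]].
  set (rho := Rmin (Rmin eO dg0) (Rmin (Rmin dg1 dg2) dg3)).
  assert (Hrho : 0 < rho).
  { unfold rho. repeat apply Rmin_pos; auto. }
  assert (Hr0 : rho <= eO /\ rho <= dg0 /\ rho <= dg1 /\ rho <= dg2 /\ rho <= dg3).
  { unfold rho.
    pose proof (Rmin_l (Rmin eO dg0) (Rmin (Rmin dg1 dg2) dg3)).
    pose proof (Rmin_r (Rmin eO dg0) (Rmin (Rmin dg1 dg2) dg3)).
    pose proof (Rmin_l eO dg0). pose proof (Rmin_r eO dg0).
    pose proof (Rmin_l (Rmin dg1 dg2) dg3). pose proof (Rmin_r (Rmin dg1 dg2) dg3).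
    pose proof (Rmin_l dg1 dg2). pose proof (Rmin_r dg1 dg2). lra. }
  destruct Hr0 as [Hr1 [Hr2 [Hr3 [Hr4 Hr5]]]].
  destruct (deriv_cont_eps _ _ _ D0 rho Hrho) as [k0 [Hk0 K0]].
  destruct (deriv_cont_eps _ _ _ D1 rho Hrho) as [k1 [Hk1 K1]].
  destruct (deriv_cont_eps _ _ _ D2 rho Hrho) as [k2 [Hk2 K2]].
  destruct (deriv_cont_eps _ _ _ D3 rho Hrho) as [k3 [Hk3 K3]].
  destruct (deriv_eps _ _ _ D0 e' He') as [l0 [Hl0 L0]].
  destruct (deriv_eps _ _ _ D1 e' He') as [l1 [Hl1 L1]].
  destruct (deriv_eps _ _ _ D2 e' He') as [l2 [Hl2 L2]].
  destruct (deriv_eps _ _ _ D3 e' He') as [l3 [Hl3 L3]].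
  set (del := Rmin (Rmin (Rmin k0 k1) (Rmin k2 k3)) (Rmin (Rmin l0 l1) (Rmin l2 l3))).
  assert (Hdel : 0 < del) by (unfold del; repeat apply Rmin_pos; auto).
  exists (mkposreal del Hdel). simpl. intros h Hh0 Hh.
  assert (Hk : Rabs h < k0 /\ Rabs h < k1 /\ Rabs h < k2 /\ Rabs h < k3 /\
               Rabs h < l0 /\ Rabs h < l1 /\ Rabs h < l2 /\ Rabs h < l3).
  { unfold del in Hh.
    pose proof (Rmin_l (Rmin (Rmin k0 k1) (Rmin k2 k3)) (Rmin (Rmin l0 l1) (Rmin l2 l3))).
    pose proof (Rmin_r (Rmin (Rmin k0 k1) (Rmin k2 k3)) (Rmin (Rmin l0 l1) (Rmin l2 l3))).
    pose proof (Rmin_l (Rmin k0 k1) (Rmin k2 k3)). pose proof (Rmin_r (Rmin k0 k1) (Rmin k2 k3)).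
    pose proof (Rmin_l (Rmin l0 l1) (Rmin l2 l3)). pose proof (Rmin_r (Rmin l0 l1) (Rmin l2 l3)).
    pose proof (Rmin_l k0 k1). pose proof (Rmin_r k0 k1). pose proof (Rmin_l k2 k3). pose proof (Rmin_r k2 k3).
    pose proof (Rmin_l l0 l1). pose proof (Rmin_r l0 l1). pose proof (Rmin_l l2 l3). pose proof (Rmin_r l2 l3).
    lra. }
  destruct Hk as [Hk0' [Hk1' [Hk2' [Hk3' [Hl0' [Hl1' [Hl2' Hl3']]]]]]].
  set (b0 := c0 (s0 + h)). set (b1 := c1 (s0 + h)). set (b2 := c2 (s0 + h)). set (b3 := c3 (s0 + h)).
  assert (B0 : Rabs (b0 - a0) < rho) by (apply K0; auto).
  assert (B1 : Rabs (b1 - a1) < rho) by (apply K1; auto).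
  assert (B2 : Rabs (b2 - a2) < rho) by (apply K2; auto).
  assert (B3 : Rabs (b3 - a3) < rho) by (apply K3; auto).
  assert (Z : forall r, Rabs (r - r) < rho) by (intro; rewrite Rminus_diag, Rabs_R0; auto).
  destruct (mvt1 (fun z => f z b1 b2 b3) a0 b0) as [z0 [Hz0 E0]].
  { intros z _. apply (Hex z b1 b2 b3 0%nat). apply HN; lra. }
  destruct (mvt1 (fun z => f a0 z b2 b3) a1 b1) as [z1 [Hz1 E1]].
  { intros z _. apply (Hex a0 z b2 b3 1%nat). apply HN; lra. }
  destruct (mvt1 (fun z => f a0 a1 z b3) a2 b2) as [z2 [Hz2 E2]].
  { intros z Hz. apply (Hex a0 a1 z b3 2%nat). apply HN; [|lra].
    pose proof (between_abs _ _ _ Hz). lra. }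
  destruct (mvt1 (fun z => f a0 a1 a2 z) a3 b3) as [z3 [Hz3 E3]].
  { intros z Hz. apply (Hex a0 a1 a2 z 3%nat). apply HN; [rewrite Rminus_diag, Rabs_R0; lra|].
    pose proof (between_abs _ _ _ Hz). lra. }
  pose proof (between_abs _ _ _ Hz0) as A0. pose proof (between_abs _ _ _ Hz1) as A1.
  pose proof (between_abs _ _ _ Hz2) as A2. pose proof (between_abs _ _ _ Hz3) as A3.
  set (G0' := Derive (fun z => f z b1 b2 b3) z0).
  set (G1' := Derive (fun z => f a0 z b2 b3) z1).
  set (G2' := Derive (fun z => f a0 a1 z b3) z2).
  set (G3' := Derive (fun z => f a0 a1 a2 z) z3).
  assert (P0 : Rabs (G0' - g0) < e').
  { apply (G0 z0 b1 b2 b3); lra. }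
  assert (P1 : Rabs (G1' - g1) < e').
  { apply (G1 a0 z1 b2 b3); try lra; rewrite Rminus_diag, Rabs_R0; lra. }
  assert (P2 : Rabs (G2' - g2) < e').
  { apply (G2 a0 a1 z2 b3); try lra; rewrite Rminus_diag, Rabs_R0; lra. }
  assert (P3 : Rabs (G3' - g3) < e').
  { apply (G3 a0 a1 a2 z3); try lra; rewrite Rminus_diag, Rabs_R0; lra. }
  assert (Q0 : Rabs ((b0 - a0) / h - d0) < e') by (apply L0; auto).
  assert (Q1 : Rabs ((b1 - a1) / h - d1) < e') by (apply L1; auto).
  assert (Q2 : Rabs ((b2 - a2) / h - d2) < e') by (apply L2; auto).
  assert (Q3 : Rabs ((b3 - a3) / h - d3) < e') by (apply L3; auto).
  assert (Eq : (f b0 b1 b2 b3 - f a0 a1 a2 a3) / h =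
     G0' * ((b0 - a0) / h) + G1' * ((b1 - a1) / h) + G2' * ((b2 - a2) / h) + G3' * ((b3 - a3) / h)).
  { replace (f b0 b1 b2 b3 - f a0 a1 a2 a3) with
      ((f b0 b1 b2 b3 - f a0 b1 b2 b3) + (f a0 b1 b2 b3 - f a0 a1 b2 b3)
       + (f a0 a1 b2 b3 - f a0 a1 a2 b3) + (f a0 a1 a2 b3 - f a0 a1 a2 a3)) by ring.
    rewrite E0, E1, E2, E3. unfold G0', G1', G2', G3'. field. auto. }
  change (c0 s0) with a0. change (c1 s0) with a1. change (c2 s0) with a2. change (c3 s0) with a3. rewrite Eq.
  pose proof (approx_prod _ _ _ _ _ P0 Q0 He'1).
  pose proof (approx_prod _ _ _ _ _ P1 Q1 He'1).
  pose proof (approx_prod _ _ _ _ _ P2 Q2 He'1).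
  pose proof (approx_prod _ _ _ _ _ P3 Q3 He'1).
  match goal with |- Rabs ?X < _ =>
    replace X with ((G0' * ((b0 - a0) / h) - g0 * d0) + (G1' * ((b1 - a1) / h) - g1 * d1)
      + (G2' * ((b2 - a2) / h) - g2 * d2) + (G3' * ((b3 - a3) / h) - g3 * d3)) by (unfold g0, g1, g2, g3; ring) end.
  eapply Rle_lt_trans; [apply Rabs4|].
  assert (e' * K <= eps / 2).
  { apply Rle_trans with (eps / (2 * K) * K). apply Rmult_le_compat_r; lra.
    right. field. lra. }
  unfold K in *. lra.
Qed.
End Chain.

Lemma iter_pd4_app (ds : list nat) (i : nat) (f : fun4) :
  iter_pd4 ds (pd4 i f) = iter_pd4 (ds ++ (i :: nil)) f.
Proof. induction ds as [|j ds IH]; simpl; auto. rewrite IH. auto. Qed.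

Lemma smooth_pd4 (f : fun4) (i : nat) : smooth_on_Omega f -> smooth_on_Omega (pd4 i f).
Proof. intros H ds t x u v HO. rewrite iter_pd4_app. apply H; auto. Qed.

Lemma smooth_ex (f : fun4) : smooth_on_Omega f ->
  forall t x u v i, Omega u v -> ex_pd4 i f t x u v.
Proof. intros H t x u v i HO. apply (H nil t x u v HO). Qed.

Lemma smooth_cont (f : fun4) t x u v : smooth_on_Omega f -> Omega u v -> pt4cont f t x u v.
Proof. intros H HO. apply (H nil t x u v HO). Qed.

Lemma chain4S (f : fun4) (c0 c1 c2 c3 : R -> R) (s0 d0 d1 d2 d3 : R) :
  smooth_on_Omega f -> Omega (c2 s0) (c3 s0) ->
  is_derive c0 s0 d0 -> is_derive c1 s0 d1 -> is_derive c2 s0 d2 -> is_derive c3 s0 d3 ->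
  is_derive (fun s => f (c0 s) (c1 s) (c2 s) (c3 s)) s0
    (pd4 0 f (c0 s0) (c1 s0) (c2 s0) (c3 s0) * d0 + pd4 1 f (c0 s0) (c1 s0) (c2 s0) (c3 s0) * d1
     + pd4 2 f (c0 s0) (c1 s0) (c2 s0) (c3 s0) * d2 + pd4 3 f (c0 s0) (c1 s0) (c2 s0) (c3 s0) * d3).
Proof.
  intros Hs HO. apply chain4. apply smooth_ex; auto.
  intros i. apply smooth_cont; auto. apply smooth_pd4; auto. auto.
Qed.

Lemma cR_plus {U : UniformSpace} (f g : U -> R) x :
  continuous f x -> continuous g x -> continuous (fun y => f y + g y) x.
Proof. intros. apply (continuous_plus (V:=R_NormedModule) f g); auto. Qed.
Lemma cR_mult {U : UniformSpace} (f g : U -> R) x :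
  continuous f x -> continuous g x -> continuous (fun y => f y * g y) x.
Proof. intros. apply (continuous_mult (K:=R_AbsRing) f g); auto. Qed.
Lemma cR_const {U : UniformSpace} (c : R) (x : U) : continuous (fun _ => c) x.
Proof. apply continuous_const. Qed.

Definition R4 := (R * R * R * R)%type.
Lemma c4_0 (t x u v : R) : continuous (fun p : R4 => fst (fst (fst p))) (t, x, u, v).
Proof.
  apply (continuous_comp (fun p : R4 => fst (fst p)) fst).
  apply (continuous_comp (fun p : R4 => fst p) fst).
  apply continuous_fst. apply continuous_fst. apply continuous_fst.
Qed.
Lemma c4_1 (t x u v : R) : continuous (fun p : R4 => snd (fst (fst p))) (t, x, u, v).
Proof.
  apply (continuous_comp (fun p : R4 => fst (fst p)) snd).
  apply (continuous_comp (fun p : R4 => fst p) fst).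
  apply continuous_fst. apply continuous_fst. apply continuous_snd.
Qed.
Lemma c4_2 (t x u v : R) : continuous (fun p : R4 => snd (fst p)) (t, x, u, v).
Proof.
  apply (continuous_comp (fun p : R4 => fst p) snd).
  apply continuous_fst. apply continuous_snd.
Qed.
Lemma c4_3 (t x u v : R) : continuous (fun p : R4 => snd p) (t, x, u, v).
Proof. apply continuous_snd. Qed.

Lemma c2_0 (t x : R) : continuous (fun p : R * R => fst p) (t, x).
Proof. apply continuous_fst. Qed.
Lemma c2_1 (t x : R) : continuous (fun p : R * R => snd p) (t, x).
Proof. apply continuous_snd. Qed.

Definition poly2 (a b c d : R) : R -> R -> R := fun t x => a + b * t + c * x + d * x ^ 2.

Lemma pd2_poly2_0 a b c d : pd2 0 (poly2 a b c d) = poly2 b 0 0 0.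
Proof.
  apply functional_extensionality; intro t; apply functional_extensionality; intro x.
  unfold pd2, poly2. apply is_derive_unique. auto_derive; auto. ring.
Qed.
Lemma pd2_poly2_1 a b c d : pd2 1 (poly2 a b c d) = poly2 c 0 (2 * d) 0.
Proof.
  apply functional_extensionality; intro t; apply functional_extensionality; intro x.
  unfold pd2, poly2. apply is_derive_unique. auto_derive; auto. ring.
Qed.
Lemma pd2_poly2 i a b c d : exists a' b' c' d', pd2 i (poly2 a b c d) = poly2 a' b' c' d'.
Proof.
  destruct i as [|i].
  - exists b, 0, 0, 0. apply pd2_poly2_0.
  - exists c, 0, (2 * d), 0. change (pd2 (S i)) with (pd2 1). apply pd2_poly2_1.
Qed.
Lemma iter_pd2_poly2 ds a b c d : exists a' b' c' d', iter_pd2 ds (poly2 a b c d) = poly2 a' b' c' d'.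
Proof.
  induction ds as [|i ds IH]; simpl.
  - exists a, b, c, d; auto.
  - destruct IH as [a' [b' [c' [d' E]]]]. rewrite E. apply pd2_poly2.
Qed.
Lemma smooth2_poly2 a b c d : smooth2 (poly2 a b c d).
Proof.
  intros ds t x. destruct (iter_pd2_poly2 ds a b c d) as [a' [b' [c' [d' E]]]]. rewrite E.
  split.
  - intros [|i]; unfold ex_pd2, poly2; auto_derive; auto.
  - unfold poly2. repeat apply cR_plus; repeat apply cR_mult; try apply cR_const;
    try apply c2_0; try apply c2_1.
Qed.

Lemma dR_plus (f g : R -> R) x df dg : is_derive f x df -> is_derive g x dg ->
  is_derive (fun y => f y + g y) x (df + dg).
Proof. intros. apply (is_derive_plus (K:=R_AbsRing) (V:=R_NormedModule) f g); auto. Qed.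
Lemma dR_minus (f g : R -> R) x df dg : is_derive f x df -> is_derive g x dg ->
  is_derive (fun y => f y - g y) x (df - dg).
Proof. intros. apply (is_derive_minus (K:=R_AbsRing) (V:=R_NormedModule) f g); auto. Qed.
Lemma dR_mult (f g : R -> R) x df dg : is_derive f x df -> is_derive g x dg ->
  is_derive (fun y => f y * g y) x (df * g x + f x * dg).
Proof. intros. apply (is_derive_mult (K:=R_AbsRing) f g); auto. intros; apply Rmult_comm. Qed.
Lemma dR_const (c x : R) : is_derive (fun _ => c) x 0.
Proof. apply (is_derive_const (K:=R_AbsRing) (V:=R_NormedModule)). Qed.
Lemma dR_id (x : R) : is_derive (fun y => y) x 1.
Proof. apply (is_derive_id (K:=R_AbsRing)). Qed.

Lemma chain4E (f : fun4) (c0 c1 c2 c3 : R -> R) (s0 d0 d1 d2 d3 a0 a1 a2 a3 : R) :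
  smooth_on_Omega f -> c0 s0 = a0 -> c1 s0 = a1 -> c2 s0 = a2 -> c3 s0 = a3 -> Omega a2 a3 ->
  is_derive c0 s0 d0 -> is_derive c1 s0 d1 -> is_derive c2 s0 d2 -> is_derive c3 s0 d3 ->
  is_derive (fun s => f (c0 s) (c1 s) (c2 s) (c3 s)) s0
    (pd4 0 f a0 a1 a2 a3 * d0 + pd4 1 f a0 a1 a2 a3 * d1
     + pd4 2 f a0 a1 a2 a3 * d2 + pd4 3 f a0 a1 a2 a3 * d3).
Proof.
  intros Hs E0 E1 E2 E3 HO. subst. apply chain4S; auto.
Qed.

Definition dAu (gamma u v : R) : R := gamma * u * Rpower (u ^ 2 + v ^ 2) (gamma / 2 - 1).

Lemma is_derive_absg_u (gamma u v : R) : Omega u v ->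
  is_derive (fun s => Rpower (s ^ 2 + v ^ 2) (gamma / 2)) u (dAu gamma u v).
Proof.
  intros HO. unfold Omega in HO.
  pose proof (derivable_pt_lim_power (u ^ 2 + v ^ 2) (gamma / 2) HO) as H.
  apply is_derive_Reals in H.
  assert (Hg : is_derive (fun s => s ^ 2 + v ^ 2) u (2 * u)).
  { auto_derive; auto. ring. }
  pose proof (is_derive_comp (fun z => Rpower z (gamma / 2)) (fun s => s ^ 2 + v ^ 2) u _ _ H Hg) as Hc.
  replace (dAu gamma u v) with (scal (2 * u) (gamma / 2 * Rpower (u ^ 2 + v ^ 2) (gamma / 2 - 1))).
  exact Hc.
  unfold dAu, scal; simpl; unfold mult; simpl. field.
Qed.

Lemma is_derive_absg_v (gamma u v : R) : Omega u v ->
  is_derive (fun s => Rpower (u ^ 2 + s ^ 2) (gamma / 2)) v (dAu gamma v u).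
Proof.
  intros HO. assert (HO' : Omega v u) by (unfold Omega in *; lra).
  pose proof (is_derive_absg_u gamma v u HO') as H.
  eapply is_derive_ext; [|exact H]. intros s; simpl. f_equal. ring.
Qed.

Lemma is_derive_eqv (f : R -> R) (x l l' : R) : is_derive f x l -> l = l' -> is_derive f x l'.
Proof. intros H E; subst; auto. Qed.

Ltac pdJ_simpl := unfold pdJ, NLS_E1, NLS_E2, absg, jupd; simpl Nat.eqb; cbv iota beta.

Section PDJ.
Variables (gamma : R) (V1 V2 : R -> R) (j : Jet).
Hypothesis HO : Omega (j 2%nat) (j 3%nat).

Lemma pdJ1_1 : pdJ 1 (NLS_E1 gamma V1 V2) j = 0.
Proof. pdJ_simpl. apply Derive_const. Qed.
Lemma pdJ1_4 : pdJ 4 (NLS_E1 gamma V1 V2) j = 0.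
Proof. pdJ_simpl. apply Derive_const. Qed.
Lemma pdJ1_5 : pdJ 5 (NLS_E1 gamma V1 V2) j = 0.
Proof. pdJ_simpl. apply Derive_const. Qed.
Lemma pdJ1_7 : pdJ 7 (NLS_E1 gamma V1 V2) j = 0.
Proof. pdJ_simpl. apply Derive_const. Qed.
Lemma pdJ1_9 : pdJ 9 (NLS_E1 gamma V1 V2) j = 0.
Proof. pdJ_simpl. apply Derive_const. Qed.
Lemma pdJ1_6 : pdJ 6 (NLS_E1 gamma V1 V2) j = -1.
Proof. pdJ_simpl. apply is_derive_unique. auto_derive; auto; ring. Qed.
Lemma pdJ1_8 : pdJ 8 (NLS_E1 gamma V1 V2) j = 1.
Proof. pdJ_simpl. apply is_derive_unique. auto_derive; auto; ring. Qed.
Lemma pdJ1_2 : pdJ 2 (NLS_E1 gamma V1 V2) j =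
  absg gamma j + V1 (j 0%nat) + dAu gamma (j 2%nat) (j 3%nat) * j 2%nat.
Proof.
  pdJ_simpl. apply is_derive_unique.
  pose proof (is_derive_absg_u gamma _ _ HO) as H.
  pose proof (dR_mult _ _ _ _ _ (dR_plus _ _ _ _ _ H (dR_const (V1 (j 0%nat)) (j 2%nat))) (dR_id (j 2%nat))) as H2.
  pose proof (dR_minus _ _ _ _ _ (dR_plus _ _ _ _ _ (dR_const (- j 6%nat + j 8%nat) (j 2%nat)) H2)
     (dR_const (V2 (j 0%nat) * j 3%nat) (j 2%nat))) as H3.
  simpl in H3. unfold absg. replace (Rpower (j 2%nat ^ 2 + j 3%nat ^ 2) (gamma / 2) + V1 (j 0%nat) + dAu gamma (j 2%nat) (j 3%nat) * j 2%nat)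
   with (0 + ((dAu gamma (j 2%nat) (j 3%nat) + 0) * j 2%nat + (Rpower (j 2%nat ^ 2 + j 3%nat ^ 2) (gamma / 2) + V1 (j 0%nat)) * 1) - 0) by ring.
  exact H3.
Qed.
Lemma pdJ1_3 : pdJ 3 (NLS_E1 gamma V1 V2) j =
  dAu gamma (j 3%nat) (j 2%nat) * j 2%nat - V2 (j 0%nat).
Proof.
  pdJ_simpl. apply is_derive_unique.
  pose proof (is_derive_absg_v gamma _ _ HO) as H.
  pose proof (dR_mult _ _ _ _ _ (dR_plus _ _ _ _ _ H (dR_const (V1 (j 0%nat)) (j 3%nat))) (dR_const (j 2%nat) (j 3%nat))) as H2.
  pose proof (dR_minus _ _ _ _ _ (dR_plus _ _ _ _ _ (dR_const (- j 6%nat + j 8%nat) (j 3%nat)) H2)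
     (dR_mult _ _ _ _ _ (dR_const (V2 (j 0%nat)) (j 3%nat)) (dR_id (j 3%nat)))) as H3.
  simpl in H3.
  replace (dAu gamma (j 3%nat) (j 2%nat) * j 2%nat - V2 (j 0%nat))
   with (0 + ((dAu gamma (j 3%nat) (j 2%nat) + 0) * j 2%nat + (Rpower (j 2%nat ^ 2 + j 3%nat ^ 2) (gamma / 2) + V1 (j 0%nat)) * 0) - (0 * j 3%nat + V2 (j 0%nat) * 1)) by ring.
  exact H3.
Qed.

Lemma pdJ2_1 : pdJ 1 (NLS_E2 gamma V1 V2) j = 0.
Proof. pdJ_simpl. apply Derive_const. Qed.
Lemma pdJ2_5 : pdJ 5 (NLS_E2 gamma V1 V2) j = 0.
Proof. pdJ_simpl. apply Derive_const. Qed.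
Lemma pdJ2_6 : pdJ 6 (NLS_E2 gamma V1 V2) j = 0.
Proof. pdJ_simpl. apply Derive_const. Qed.
Lemma pdJ2_7 : pdJ 7 (NLS_E2 gamma V1 V2) j = 0.
Proof. pdJ_simpl. apply Derive_const. Qed.
Lemma pdJ2_8 : pdJ 8 (NLS_E2 gamma V1 V2) j = 0.
Proof. pdJ_simpl. apply Derive_const. Qed.
Lemma pdJ2_4 : pdJ 4 (NLS_E2 gamma V1 V2) j = 1.
Proof. pdJ_simpl. apply is_derive_unique. auto_derive; auto; ring. Qed.
Lemma pdJ2_9 : pdJ 9 (NLS_E2 gamma V1 V2) j = 1.
Proof. pdJ_simpl. apply is_derive_unique. auto_derive; auto; ring. Qed.
Lemma pdJ2_2 : pdJ 2 (NLS_E2 gamma V1 V2) j =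
  dAu gamma (j 2%nat) (j 3%nat) * j 3%nat + V2 (j 0%nat).
Proof.
  pdJ_simpl. apply is_derive_unique.
  pose proof (is_derive_absg_u gamma _ _ HO) as H.
  pose proof (dR_mult _ _ _ _ _ (dR_plus _ _ _ _ _ H (dR_const (V1 (j 0%nat)) (j 2%nat))) (dR_const (j 3%nat) (j 2%nat))) as H2.
  pose proof (dR_plus _ _ _ _ _ (dR_plus _ _ _ _ _ (dR_const (j 4%nat + j 9%nat) (j 2%nat)) H2)
     (dR_mult _ _ _ _ _ (dR_const (V2 (j 0%nat)) (j 2%nat)) (dR_id (j 2%nat)))) as H3.
  simpl in H3.
  replace (dAu gamma (j 2%nat) (j 3%nat) * j 3%nat + V2 (j 0%nat))
   with (0 + ((dAu gamma (j 2%nat) (j 3%nat) + 0) * j 3%nat + (Rpower (j 2%nat ^ 2 + j 3%nat ^ 2) (gamma / 2) + V1 (j 0%nat)) * 0) + (0 * j 2%nat + V2 (j 0%nat) * 1)) by ring.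
  exact H3.
Qed.
Lemma pdJ2_3 : pdJ 3 (NLS_E2 gamma V1 V2) j =
  absg gamma j + V1 (j 0%nat) + dAu gamma (j 3%nat) (j 2%nat) * j 3%nat.
Proof.
  pdJ_simpl. apply is_derive_unique.
  pose proof (is_derive_absg_v gamma _ _ HO) as H.
  pose proof (dR_mult _ _ _ _ _ (dR_plus _ _ _ _ _ H (dR_const (V1 (j 0%nat)) (j 3%nat))) (dR_id (j 3%nat))) as H2.
  pose proof (dR_plus _ _ _ _ _ (dR_plus _ _ _ _ _ (dR_const (j 4%nat + j 9%nat) (j 3%nat)) H2)
     (dR_const (V2 (j 0%nat) * j 2%nat) (j 3%nat))) as H3.
  simpl in H3. unfold absg.
  replace (Rpower (j 2%nat ^ 2 + j 3%nat ^ 2) (gamma / 2) + V1 (j 0%nat) + dAu gamma (j 3%nat) (j 2%nat) * j 3%nat)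
   with (0 + ((dAu gamma (j 3%nat) (j 2%nat) + 0) * j 3%nat + (Rpower (j 2%nat ^ 2 + j 3%nat ^ 2) (gamma / 2) + V1 (j 0%nat)) * 1) + 0) by ring.
  exact H3.
Qed.
End PDJ.

Lemma sum10 (f : nat -> R) : sum_f_R0 f 9 =
  f 0%nat + f 1%nat + f 2%nat + f 3%nat + f 4%nat + f 5%nat + f 6%nat + f 7%nat + f 8%nat + f 9%nat.
Proof. reflexivity. Qed.

Definition Sec (c p r al t0 x0 : R) : R -> R -> R :=
  fun t x => c + p * (x - x0) + / 2 * r * (x - x0) ^ 2 + al * (t - t0).

Section SecFacts.
Variables (c p r al t0 x0 : R).
Lemma Sec_at : Sec c p r al t0 x0 t0 x0 = c.
Proof. unfold Sec. ring. Qed.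
Lemma Sec_dt (x t : R) : is_derive (fun s => Sec c p r al t0 x0 s x) t al.
Proof. unfold Sec. auto_derive; auto; try ring. Qed.
Lemma Sec_dx (t y : R) : is_derive (fun z => Sec c p r al t0 x0 t z) y (p + r * (y - x0)).
Proof. unfold Sec. auto_derive; auto; try field. Qed.
Lemma Sec_d_t (t x : R) : d_t (Sec c p r al t0 x0) t x = al.
Proof. apply is_derive_unique. apply Sec_dt. Qed.
Lemma Sec_d_x (t x : R) : d_x (Sec c p r al t0 x0) t x = p + r * (x - x0).
Proof. apply is_derive_unique. apply Sec_dx. Qed.
Lemma Sec_d_xx (t x : R) : d_x (d_x (Sec c p r al t0 x0)) t x = r.
Proof.
  unfold d_x at 1. rewrite (Derive_ext _ (fun z => p + r * (z - x0))).
  apply is_derive_unique. auto_derive; auto; try ring.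
  intros z. apply Sec_d_x.
Qed.
Lemma Sec_smooth : smooth2 (Sec c p r al t0 x0).
Proof.
  replace (Sec c p r al t0 x0) with (poly2 (c - p * x0 + / 2 * r * x0 ^ 2 - al * t0) al (p - r * x0) (/ 2 * r)).
  apply smooth2_poly2.
  apply functional_extensionality; intro t; apply functional_extensionality; intro x.
  unfold Sec, poly2. field.
Qed.
Lemma Sec_cont_x (t y : R) : continuous (fun z => Sec c p r al t0 x0 t z) y.
Proof. apply (ex_derive_continuous (K:=R_AbsRing) (V:=R_NormedModule)). eexists; apply Sec_dx. Qed.
Lemma Sec_cont_t (x t : R) : continuous (fun s => Sec c p r al t0 x0 s x) t.
Proof. apply (ex_derive_continuous (K:=R_AbsRing) (V:=R_NormedModule)). eexists; apply Sec_dt. Qed.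
End SecFacts.

Section Crit.
Variables (Q : VF) (t0 x0 u0 v0 p q r s al be : R).
Hypothesis HQ : smooth_VF Q.
Hypothesis Htau : forall t x u v, Omega u v -> vf_tau Q t x u v = 0.
Hypothesis HO : Omega u0 v0.

Let U := Sec u0 p r al t0 x0.
Let W := Sec v0 q s be t0 x0.

Lemma locX : locally x0 (fun y => Omega (U t0 y) (W t0 y)).
Proof.
  apply Omega_curve. apply Sec_cont_x. apply Sec_cont_x.
  unfold U, W; rewrite !Sec_at; auto.
Qed.
Lemma locT : locally t0 (fun z => Omega (U z x0) (W z x0)).
Proof.
  apply Omega_curve. apply Sec_cont_t. apply Sec_cont_t.
  unfold U, W; rewrite !Sec_at; auto.
Qed.

Local Notation xi := (vf_xi Q).
Local Notation eta := (vf_eta Q).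
Local Notation theta := (vf_theta Q).
Lemma sm_xi : smooth_on_Omega xi. Proof. apply HQ. Qed.
Lemma sm_eta : smooth_on_Omega eta. Proof. apply HQ. Qed.
Lemma sm_theta : smooth_on_Omega theta. Proof. apply HQ. Qed.

Definition Pt (g : fun4) := g t0 x0 u0 v0.
Definition DT (g : fun4) := Pt (pd4 0 g) + Pt (pd4 2 g) * al + Pt (pd4 3 g) * be.
Definition DX (g : fun4) := Pt (pd4 1 g) + Pt (pd4 2 g) * p + Pt (pd4 3 g) * q.
Definition DXX (g : fun4) :=
  (Pt (pd4 1 (pd4 1 g)) + Pt (pd4 2 (pd4 1 g)) * p + Pt (pd4 3 (pd4 1 g)) * q)
  + (Pt (pd4 1 (pd4 2 g)) + Pt (pd4 2 (pd4 2 g)) * p + Pt (pd4 3 (pd4 2 g)) * q) * p + Pt (pd4 2 g) * r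
  + (Pt (pd4 1 (pd4 3 g)) + Pt (pd4 2 (pd4 3 g)) * p + Pt (pd4 3 (pd4 3 g)) * q) * q + Pt (pd4 3 g) * s.
Definition Dx (g : fun4) (y : R) :=
  pd4 1 g t0 y (U t0 y) (W t0 y) + pd4 2 g t0 y (U t0 y) (W t0 y) * (p + r * (y - x0))
  + pd4 3 g t0 y (U t0 y) (W t0 y) * (q + s * (y - x0)).

Lemma DT_val (g : fun4) : smooth_on_Omega g -> d_t (along g U W) t0 x0 = DT g.
Proof.
  intros Hg. unfold d_t, along. apply is_derive_unique.
  pose proof (chain4E g (fun z => z) (fun _ => x0) (fun z => U z x0) (fun z => W z x0) t0 1 0 al be
     t0 x0 u0 v0 Hg eq_refl eq_refl (Sec_at _ _ _ _ _ _) (Sec_at _ _ _ _ _ _) HO (dR_id _) (dR_const _ _)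
     (Sec_dt _ _ _ _ _ _ _ _) (Sec_dt _ _ _ _ _ _ _ _)) as H.
  unfold DT, Pt. replace (pd4 0 g t0 x0 u0 v0 + pd4 2 g t0 x0 u0 v0 * al + pd4 3 g t0 x0 u0 v0 * be)
    with (pd4 0 g t0 x0 u0 v0 * 1 + pd4 1 g t0 x0 u0 v0 * 0 + pd4 2 g t0 x0 u0 v0 * al + pd4 3 g t0 x0 u0 v0 * be) by ring.
  exact H.
Qed.

Lemma Dx_is (g : fun4) (y : R) : smooth_on_Omega g -> Omega (U t0 y) (W t0 y) ->
  is_derive (fun z => g t0 z (U t0 z) (W t0 z)) y (Dx g y).
Proof.
  intros Hg HOy.
  pose proof (chain4E g (fun _ => t0) (fun z => z) (fun z => U t0 z) (fun z => W t0 z) y 0 1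
     (p + r * (y - x0)) (q + s * (y - x0))
     t0 y (U t0 y) (W t0 y) Hg eq_refl eq_refl eq_refl eq_refl HOy (dR_const _ _) (dR_id _)
     (Sec_dx _ _ _ _ _ _ _ _) (Sec_dx _ _ _ _ _ _ _ _)) as H.
  apply (is_derive_eqv _ _ _ _ H). unfold Dx. ring.
Qed.

Lemma Dx_at (g : fun4) : Dx g x0 = DX g.
Proof. unfold Dx, DX, Pt, U, W. rewrite !Sec_at. ring. Qed.

Lemma DXX_is (g : fun4) : smooth_on_Omega g -> is_derive (Dx g) x0 (DXX g).
Proof.
  intros Hg. unfold Dx.
  assert (HO' : Omega (U t0 x0) (W t0 x0)) by (unfold U, W; rewrite !Sec_at; auto).
  assert (C : forall i, is_derive (fun z => pd4 i g t0 z (U t0 z) (W t0 z)) x0 (Dx (pd4 i g) x0)).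
  { intros i. apply Dx_is; auto. apply smooth_pd4; auto. }
  assert (L1 : forall c d, is_derive (fun z : R => c + d * (z - x0)) x0 d).
  { intros. auto_derive; auto; try ring. }
  pose proof (dR_plus _ _ _ _ _ (dR_plus _ _ _ _ _ (C 1%nat) (dR_mult _ _ _ _ _ (C 2%nat) (L1 p r)))
                (dR_mult _ _ _ _ _ (C 3%nat) (L1 q s))) as H.
  apply (is_derive_eqv _ _ _ _ H).
  rewrite !Dx_at. unfold DXX, DX, Pt. unfold U, W. rewrite !Sec_at. ring.
Qed.

Lemma tau_pt : tauS Q U W t0 x0 = 0.
Proof. unfold tauS, along, U, W. rewrite !Sec_at. apply Htau; auto. Qed.

Lemma dt_tau : d_t (tauS Q U W) t0 x0 = 0.
Proof.
  unfold d_t, tauS, along. rewrite (Derive_ext_loc _ (fun _ => 0)). apply Derive_const.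
  apply (filter_imp _ _ (fun z Hz => Htau _ _ _ _ Hz) locT).
Qed.

Lemma dx_tau_loc : locally x0 (fun y => d_x (tauS Q U W) t0 y = 0).
Proof.
  apply (filter_imp (fun y => locally y (fun z => Omega (U t0 z) (W t0 z)))).
  - intros y Hy. unfold d_x, tauS, along. rewrite (Derive_ext_loc _ (fun _ => 0)). apply Derive_const.
    apply (filter_imp _ _ (fun z Hz => Htau _ _ _ _ Hz) Hy).
  - apply locally_locally. apply locX.
Qed.

Lemma dx_along_loc (g : fun4) : smooth_on_Omega g ->
  locally x0 (fun y => d_x (along g U W) t0 y = Dx g y).
Proof.
  intros Hg. apply (filter_imp _ _ (fun y Hy => is_derive_unique _ _ _ (Dx_is g y Hg Hy)) locX).
Qed.

Lemma dx_along_at (g : fun4) : smooth_on_Omega g -> d_x (along g U W) t0 x0 = DX g.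
Proof. intros Hg. rewrite <- Dx_at. apply (locally_singleton _ _ (dx_along_loc g Hg)). Qed.

Lemma prol_t_val (g : fun4) (Z : R -> R -> R) (pZ : R) : smooth_on_Omega g ->
  d_x Z t0 x0 = pZ -> prol_t Q U W g Z t0 x0 = DT g - pZ * DT xi.
Proof.
  intros Hg HZ. unfold prol_t. rewrite DT_val by auto. unfold xiS. rewrite DT_val by apply sm_xi.
  rewrite dt_tau, HZ. ring.
Qed.

Lemma prol_x_loc (g : fun4) (Z : R -> R -> R) (pZ rZ : R) : smooth_on_Omega g ->
  (forall y, d_x Z t0 y = pZ + rZ * (y - x0)) ->
  locally x0 (fun y => prol_x Q U W g Z t0 y = Dx g y - (pZ + rZ * (y - x0)) * Dx xi y).
Proof.
  intros Hg HZ.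
  pose proof (filter_and _ _ (filter_and _ _ (dx_along_loc g Hg) (dx_along_loc xi sm_xi)) dx_tau_loc) as H.
  revert H. apply filter_imp. intros y [[H1 H2] H3].
  unfold prol_x. rewrite H1. unfold xiS. rewrite H2, H3, HZ. ring.
Qed.

Lemma prol_xx_val (g : fun4) (Z : R -> R -> R) (pZ rZ : R) : smooth_on_Omega g ->
  (forall y, d_x Z t0 y = pZ + rZ * (y - x0)) -> d_x (d_x Z) t0 x0 = rZ ->
  prol_xx Q U W g Z t0 x0 = DXX g - (rZ * DX xi + pZ * DXX xi) - rZ * DX xi.
Proof.
  intros Hg HZ HZZ. unfold prol_xx. unfold d_x at 1.
  assert (E : Derive (fun y : R => prol_x Q U W g Z t0 y) x0 = Derive (fun y => Dx g y - (pZ + rZ * (y - x0)) * Dx xi y) x0) by (apply Derive_ext_loc; apply prol_x_loc; auto). rewrite E.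
  rewrite (locally_singleton _ _ dx_tau_loc), HZZ.
  unfold xiS. rewrite dx_along_at by apply sm_xi.
  assert (L1 : is_derive (fun z : R => pZ + rZ * (z - x0)) x0 rZ).
  { auto_derive; auto; try ring. }
  pose proof (dR_minus _ _ _ _ _ (DXX_is g Hg) (dR_mult _ _ _ _ _ L1 (DXX_is xi sm_xi))) as H.
  rewrite (is_derive_unique (fun y : R => Dx g y - (pZ + rZ * (y - x0)) * Dx xi y) _ _ H). rewrite Dx_at. ring.
Qed.

Definition Aval (gamma : R) := Rpower (u0 ^ 2 + v0 ^ 2) (gamma / 2).

Lemma jet_2 : jet2 U W t0 x0 2%nat = u0.
Proof. unfold jet2, U. apply Sec_at. Qed.
Lemma jet_3 : jet2 U W t0 x0 3%nat = v0.
Proof. unfold jet2, W. apply Sec_at. Qed.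
Lemma jet_0 : jet2 U W t0 x0 0%nat = t0.
Proof. reflexivity. Qed.

Lemma crit1 (gamma : R) (V1 V2 : R -> R) :
  prol2_apply Q U W (NLS_E1 gamma V1 V2) t0 x0 =
  Pt eta * (Aval gamma + V1 t0 + dAu gamma u0 v0 * u0) + Pt theta * (dAu gamma v0 u0 * u0 - V2 t0)
  - (DT theta - q * DT xi) + (DXX eta - (r * DX xi + p * DXX xi) - r * DX xi).
Proof.
  assert (HOj : Omega (jet2 U W t0 x0 2%nat) (jet2 U W t0 x0 3%nat)) by (rewrite jet_2, jet_3; auto).
  unfold prol2_apply. rewrite sum10. unfold prol2.
  rewrite tau_pt.
  rewrite (pdJ1_1 gamma V1 V2), (pdJ1_2 gamma V1 V2 _ HOj), (pdJ1_3 gamma V1 V2 _ HOj), pdJ1_4, pdJ1_5,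
    pdJ1_6, pdJ1_7, pdJ1_8, pdJ1_9.
  rewrite jet_2, jet_3, jet_0.
  rewrite (prol_t_val theta W q sm_theta) by (unfold W; rewrite Sec_d_x; ring).
  rewrite (prol_xx_val eta U p r sm_eta) by (unfold U; intros; try rewrite Sec_d_x; try rewrite Sec_d_xx; ring).
  unfold along, absg, Aval. rewrite jet_2, jet_3.
  unfold Pt, U, W. rewrite !Sec_at. ring.
Qed.

Lemma crit2 (gamma : R) (V1 V2 : R -> R) :
  prol2_apply Q U W (NLS_E2 gamma V1 V2) t0 x0 =
  Pt eta * (dAu gamma u0 v0 * v0 + V2 t0) + Pt theta * (Aval gamma + V1 t0 + dAu gamma v0 u0 * v0)
  + (DT eta - p * DT xi) + (DXX theta - (s * DX xi + q * DXX xi) - s * DX xi).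
Proof.
  assert (HOj : Omega (jet2 U W t0 x0 2%nat) (jet2 U W t0 x0 3%nat)) by (rewrite jet_2, jet_3; auto).
  unfold prol2_apply. rewrite sum10. unfold prol2.
  rewrite tau_pt.
  rewrite (pdJ2_1 gamma V1 V2), (pdJ2_2 gamma V1 V2 _ HOj), (pdJ2_3 gamma V1 V2 _ HOj), pdJ2_4, pdJ2_5,
    pdJ2_6, pdJ2_7, pdJ2_8, pdJ2_9.
  rewrite jet_2, jet_3, jet_0.
  rewrite (prol_t_val eta U p sm_eta) by (unfold U; rewrite Sec_d_x; ring).
  rewrite (prol_xx_val theta W q s sm_theta) by (unfold W; intros; try rewrite Sec_d_x; try rewrite Sec_d_xx; ring).
  unfold along, absg, Aval. rewrite jet_2, jet_3.
  unfold Pt, U, W. rewrite !Sec_at. ring.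
Qed.

End Crit.

Definition affV (c d t0 : R) : R -> R := fun t => c + d * (t - t0).

Lemma affV_Dn (c d t0 : R) (n : nat) : exists k, Derive_n (affV c d t0) (S n) = fun _ => k.
Proof.
  induction n as [|n [k IH]].
  - exists d. simpl. apply functional_extensionality. intros t. apply is_derive_unique.
    unfold affV. auto_derive; auto; ring.
  - exists 0. change (Derive_n (affV c d t0) (S (S n))) with (Derive (Derive_n (affV c d t0) (S n))).
    rewrite IH. apply functional_extensionality. intros t. apply Derive_const.
Qed.

Lemma affV_smooth (c d t0 : R) : smooth1 (affV c d t0).
Proof.
  intros n t. destruct n as [|n]. simpl; auto.
  destruct n as [|n].
  - simpl. unfold affV. auto_derive; auto.
  - change (ex_derive (Derive_n (affV c d t0) (S n)) t). destruct (affV_Dn c d t0 n) as [k E].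
    rewrite E. apply ex_derive_const.
Qed.

Lemma pdJ1_same (gamma : R) (V1 V2 V1' V2' : R -> R) (j : Jet) (k : nat) :
  k <> 0%nat -> V1 (j 0%nat) = V1' (j 0%nat) -> V2 (j 0%nat) = V2' (j 0%nat) ->
  pdJ k (NLS_E1 gamma V1 V2) j = pdJ k (NLS_E1 gamma V1' V2') j.
Proof.
  intros Hk H1 H2. unfold pdJ. f_equal. apply functional_extensionality. intros z.
  unfold NLS_E1. replace (jupd k j z 0%nat) with (j 0%nat).
  rewrite H1, H2. reflexivity.
  unfold jupd. destruct k; [lia|reflexivity].
Qed.

Lemma pdJ1_0_aff (gamma c1 a c2 b t0 : R) (j : Jet) :
  pdJ 0 (NLS_E1 gamma (affV c1 a t0) (affV c2 b t0)) j = a * j 2%nat - b * j 3%nat.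
Proof.
  pdJ_simpl. apply is_derive_unique. unfold affV. auto_derive; auto; ring.
Qed.

Lemma prol2_apply_diff (gamma : R) (Q : VF) U W t0 x0 (V1 V2 V1' V2' : R -> R) :
  V1 t0 = V1' t0 -> V2 t0 = V2' t0 ->
  prol2_apply Q U W (NLS_E1 gamma V1 V2) t0 x0 - prol2_apply Q U W (NLS_E1 gamma V1' V2') t0 x0 =
  prol2 Q U W 0 t0 x0 * (pdJ 0 (NLS_E1 gamma V1 V2) (jet2 U W t0 x0) - pdJ 0 (NLS_E1 gamma V1' V2') (jet2 U W t0 x0)).
Proof.
  intros H1 H2. unfold prol2_apply. rewrite !sum10.
  assert (HS : forall k, k <> 0%nat -> pdJ k (NLS_E1 gamma V1 V2) (jet2 U W t0 x0) = pdJ k (NLS_E1 gamma V1' V2') (jet2 U W t0 x0)).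
  { intros k Hk. apply pdJ1_same; auto. }
  rewrite (HS 1%nat), (HS 2%nat), (HS 3%nat), (HS 4%nat), (HS 5%nat), (HS 6%nat), (HS 7%nat), (HS 8%nat), (HS 9%nat) by lia.
  ring.
Qed.

Lemma tau_zero (gamma : R) (Q : VF) :
  (forall V1 V2 : R -> R, smooth1 V1 -> smooth1 V2 -> in_max_Lie_alg gamma V1 V2 Q) ->
  forall t x u v, Omega u v -> vf_tau Q t x u v = 0.
Proof.
  intros Hall t0 x0 u0 v0 HO.
  set (U := Sec u0 0 0 0 t0 x0). set (W := Sec v0 0 0 0 t0 x0).
  set (A := Rpower (u0 ^ 2 + v0 ^ 2) (gamma / 2)).
  assert (Crit : forall a b, prol2_apply Q U W (NLS_E1 gamma (affV (- A) a t0) (affV 0 b t0)) t0 x0 = 0).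
  { intros a b. destruct (Hall (affV (- A) a t0) (affV 0 b t0) (affV_smooth _ _ _) (affV_smooth _ _ _)) as [_ H].
    apply (H U W t0 x0 (Sec_smooth _ _ _ _ _ _) (Sec_smooth _ _ _ _ _ _)).
    - unfold U, W. rewrite !Sec_at. auto.
    - unfold NLS_E1, absg, jet2. unfold U, W. rewrite !Sec_at, !Sec_d_t, Sec_d_xx.
      unfold affV, A. ring.
    - unfold NLS_E2, absg, jet2. unfold U, W. rewrite !Sec_at, !Sec_d_t, Sec_d_xx.
      unfold affV, A. ring. }
  assert (D : forall a b, prol2 Q U W 0 t0 x0 * (a * u0 - b * v0) = 0).
  { intros a b.
    pose proof (prol2_apply_diff gamma Q U W t0 x0 (affV (- A) a t0) (affV 0 b t0) (affV (- A) 0 t0) (affV 0 0 t0)) as E.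
    rewrite !Crit in E. rewrite !pdJ1_0_aff in E.
    assert (J2 : jet2 U W t0 x0 2%nat = u0) by (unfold jet2, U; apply Sec_at).
    assert (J3 : jet2 U W t0 x0 3%nat = v0) by (unfold jet2, W; apply Sec_at).
    rewrite J2, J3 in E. unfold affV in E. rewrite Rminus_diag in E.
    replace (prol2 Q U W 0 t0 x0 * (a * u0 - b * v0)) with (- (0 - 0 - prol2 Q U W 0 t0 x0 * (a * u0 - b * v0 - (0 * u0 - 0 * v0)))) by ring.
    rewrite E. ring.
    unfold affV; ring. unfold affV; ring. }
  assert (P0 : prol2 Q U W 0 t0 x0 = vf_tau Q t0 x0 u0 v0).
  { simpl. unfold tauS, along, U, W. rewrite !Sec_at. reflexivity. }
  rewrite P0 in D. pose proof (D 1 0) as D1. pose proof (D 0 1) as D2.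
  unfold Omega in HO. set (T := vf_tau Q t0 x0 u0 v0) in *.
  assert (T * T * (u0 ^ 2 + v0 ^ 2) = 0) by nra.
  destruct (Rmult_integral _ _ H) as [H'|H']; [|lra]. nra.
Qed.

Section Ext.
Variables (gamma : R) (Q : VF).
Hypothesis Hall : forall V1 V2 : R -> R, smooth1 V1 -> smooth1 V2 -> in_max_Lie_alg gamma V1 V2 Q.

Lemma HQ : smooth_VF Q.
Proof. destruct (Hall (affV 0 0 0) (affV 0 0 0) (affV_smooth _ _ _) (affV_smooth _ _ _)) as [H _]. exact H. Qed.
Lemma Htau : forall t x u v, Omega u v -> vf_tau Q t x u v = 0.
Proof. apply tau_zero with gamma. exact Hall. Qed.

Local Notation xi := (vf_xi Q).
Local Notation eta := (vf_eta Q).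
Local Notation theta := (vf_theta Q).

Lemma crit_pt (t0 x0 u0 v0 p q r s a b al be : R) : Omega u0 v0 ->
  al = - (s + (Aval u0 v0 gamma + a) * v0 + b * u0) -> be = r + (Aval u0 v0 gamma + a) * u0 - b * v0 ->
  Pt t0 x0 u0 v0 eta * (Aval u0 v0 gamma + a + dAu gamma u0 v0 * u0) + Pt t0 x0 u0 v0 theta * (dAu gamma v0 u0 * u0 - b)
  - (DT t0 x0 u0 v0 al be theta - q * DT t0 x0 u0 v0 al be xi)
  + (DXX t0 x0 u0 v0 p q r s eta - (r * DX t0 x0 u0 v0 p q xi + p * DXX t0 x0 u0 v0 p q r s xi) - r * DX t0 x0 u0 v0 p q xi) = 0
  /\
  Pt t0 x0 u0 v0 eta * (dAu gamma u0 v0 * v0 + b) + Pt t0 x0 u0 v0 theta * (Aval u0 v0 gamma + a + dAu gamma v0 u0 * v0)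
  + (DT t0 x0 u0 v0 al be eta - p * DT t0 x0 u0 v0 al be xi)
  + (DXX t0 x0 u0 v0 p q r s theta - (s * DX t0 x0 u0 v0 p q xi + q * DXX t0 x0 u0 v0 p q r s xi) - s * DX t0 x0 u0 v0 p q xi) = 0.
Proof.
  intros HO Hal Hbe.
  destruct (Hall (affV a 0 t0) (affV b 0 t0) (affV_smooth _ _ _) (affV_smooth _ _ _)) as [_ H].
  set (U := Sec u0 p r al t0 x0). set (W := Sec v0 q s be t0 x0).
  destruct (H U W t0 x0 (Sec_smooth _ _ _ _ _ _) (Sec_smooth _ _ _ _ _ _)) as [H1 H2].
  - unfold U, W. rewrite !Sec_at. auto.
  - unfold NLS_E1, absg, jet2. unfold U, W. rewrite !Sec_at, !Sec_d_t, Sec_d_xx.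
    unfold affV, Aval in *. subst. ring.
  - unfold NLS_E2, absg, jet2. unfold U, W. rewrite !Sec_at, !Sec_d_t, Sec_d_xx.
    unfold affV, Aval in *. subst. ring.
  - unfold U, W in H1, H2.
    rewrite (crit1 Q t0 x0 u0 v0 p q r s al be HQ Htau HO) in H1.
    rewrite (crit2 Q t0 x0 u0 v0 p q r s al be HQ Htau HO) in H2.
    replace (affV a 0 t0 t0) with a in H1, H2 by (unfold affV; ring).
    replace (affV b 0 t0 t0) with b in H1, H2 by (unfold affV; ring).
    split; auto.
Qed.


Section Pt.
Variables (t0 x0 u0 v0 : R).
Hypothesis HO : Omega u0 v0.
Local Notation "'P' g" := (Pt t0 x0 u0 v0 g) (at level 10, g at level 9).

Tactic Notation "getK" constr(p) constr(q) constr(r) constr(s) constr(a) constr(b) ident(n1) ident(n2) := let H := fresh "K" in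
  pose proof (crit_pt t0 x0 u0 v0 p q r s a b _ _ HO eq_refl eq_refl) as H; destruct H as [n1 n2];
  unfold DT, DX, DXX in n1, n2.

Lemma ext_X : P (pd4 1 xi) = 0 /\ P (pd4 3 theta) = P (pd4 2 eta) /\ P (pd4 2 theta) = - P (pd4 3 eta).
Proof.
  getK 0 0 0 0 0 0 A1 A2. getK 0 0 1 0 0 0 B1 B2. getK 0 0 0 1 0 0 C1 C2.
  repeat split; lra.
Qed.

Lemma ext_X2 : P (pd4 2 xi) = 0 /\ P (pd4 3 xi) = 0.
Proof.
  destruct ext_X as [E1 [E2 E3]].
  getK 1 0 0 0 0 0 A1 A2. getK 1 0 1 0 0 0 B1 B2.
  getK 0 1 0 0 0 0 C1 C2. getK 0 1 1 0 0 0 D1 D2.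
  split; lra.
Qed.

Lemma ext_H : P eta = u0 * P (pd4 2 eta) + v0 * P (pd4 3 eta) /\
              P theta = u0 * P (pd4 2 theta) + v0 * P (pd4 3 theta).
Proof.
  destruct ext_X as [E1 [E2 E3]].
  getK 0 0 0 0 0 0 A1 A2. getK 0 0 0 0 1 0 B1 B2. getK 0 0 0 0 0 1 C1 C2.
  split; lra.
Qed.

Lemma ext_Z :
  P eta * (Aval u0 v0 gamma + dAu gamma u0 v0 * u0) + P theta * (dAu gamma v0 u0 * u0)
  - (P (pd4 0 theta) + P (pd4 2 theta) * (- (Aval u0 v0 gamma * v0)) + P (pd4 3 theta) * (Aval u0 v0 gamma * u0))
  + P (pd4 1 (pd4 1 eta)) = 0 /\
  P eta * (dAu gamma u0 v0 * v0) + P theta * (Aval u0 v0 gamma + dAu gamma v0 u0 * v0)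
  + (P (pd4 0 eta) + P (pd4 2 eta) * (- (Aval u0 v0 gamma * v0)) + P (pd4 3 eta) * (Aval u0 v0 gamma * u0))
  + P (pd4 1 (pd4 1 theta)) = 0.
Proof.
  getK 0 0 0 0 0 0 A1 A2. split; lra.
Qed.

Lemma ext_QL : P (pd4 2 (pd4 2 theta)) = 0 /\
  P (pd4 2 (pd4 1 theta)) + P (pd4 1 (pd4 2 theta)) = P (pd4 0 xi).
Proof.
  destruct ext_X2 as [E1 E2].
  getK 0 0 0 0 0 0 A1 A2. getK 1 0 0 0 0 0 B1 B2. getK (-1) 0 0 0 0 0 C1 C2.
  rewrite E1, E2 in A2, B2, C2.
  split; lra.
Qed.
End Pt.
End Ext.

Lemma const_between (F : R -> R) (a b : R) :
  (forall z, Rmin a b <= z <= Rmax a b -> is_derive F z 0) -> F a = F b.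
Proof.
  intros H. destruct (Rlt_le_dec a b) as [Hab|Hab].
  - apply (eq_is_derive (V:=R_NormedModule)). intros z Hz. apply H. unfold Rmin, Rmax.
    destruct Rle_dec; lra. auto.
  - destruct (Req_dec a b) as [E|E]. subst; auto.
    symmetry. apply (eq_is_derive (V:=R_NormedModule)). intros z Hz. apply H. unfold Rmin, Rmax.
    destruct Rle_dec; lra. lra.
Qed.

Lemma const_all (F : R -> R) (a b : R) : (forall z, is_derive F z 0) -> F a = F b.
Proof. intros H. apply const_between. intros; apply H. Qed.

Lemma Rpower_pos (x y : R) : 0 < Rpower x y.
Proof. unfold Rpower. apply exp_pos. Qed.

Lemma Rpower4_ne1 (gamma : R) : gamma <> 0 -> Rpower 4 (gamma / 2) <> 1.
Proof.
  intros Hg E. unfold Rpower in E. rewrite <- exp_0 in E. apply exp_inv in E.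
  assert (0 < ln 4). { rewrite <- ln_1. apply ln_increasing; lra. }
  assert (gamma / 2 = 0).
  { apply Rmult_integral in E. destruct E; auto. lra. }
  lra.
Qed.

Lemma dAu_eq (gamma u v : R) : Omega u v ->
  dAu gamma u v = gamma * u * Rpower (u ^ 2 + v ^ 2) (gamma / 2 - 1) /\
  Rpower (u ^ 2 + v ^ 2) (gamma / 2 - 1) * (u ^ 2 + v ^ 2) = Rpower (u ^ 2 + v ^ 2) (gamma / 2).
Proof.
  intros HO. split. reflexivity.
  unfold Omega in HO. rewrite <- (Rpower_1 (u ^ 2 + v ^ 2)) at 2 by auto.
  rewrite <- Rpower_plus. f_equal. ring.
Qed.

Lemma Omega_scale (u v k : R) : Omega u v -> 0 < k -> Omega (k * u) (k * v).
Proof. unfold Omega; intros. replace ((k * u) ^ 2 + (k * v) ^ 2) with (k ^ 2 * (u ^ 2 + v ^ 2)) by ring.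
  apply Rmult_lt_0_compat; auto. apply pow2_gt_0; lra. Qed.

Lemma euler_homog (f : fun4) : smooth_on_Omega f ->
  (forall t x u v, Omega u v -> f t x u v = u * pd4 2 f t x u v + v * pd4 3 f t x u v) ->
  forall t x u v k, Omega u v -> 0 < k -> f t x (k * u) (k * v) = k * f t x u v.
Proof.
  intros Hs HE t x u v k HO Hk.
  set (g := fun z => f t x (z * u) (z * v)).
  assert (Dg : forall z, 0 < z -> is_derive g z (pd4 2 f t x (z * u) (z * v) * u + pd4 3 f t x (z * u) (z * v) * v)).
  { intros z Hz. unfold g.
    pose proof (chain4E f (fun _ => t) (fun _ => x) (fun z => z * u) (fun z => z * v) z 0 0 u v
      t x (z * u) (z * v) Hs eq_refl eq_refl eq_refl eq_refl (Omega_scale _ _ _ HO Hz)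
      (dR_const _ _) (dR_const _ _)) as H.
    apply (is_derive_eqv _ _ _ _ (H ltac:(auto_derive; auto; ring) ltac:(auto_derive; auto; ring))). ring. }
  assert (Dh : forall z, 0 < z -> is_derive (fun z => g z * / z) z 0).
  { intros z Hz.
    assert (Di : is_derive (fun z : R => / z) z (- / z ^ 2)).
    { auto_derive. lra. field. lra. }
    pose proof (dR_mult _ _ _ _ _ (Dg z Hz) Di) as H.
    apply (is_derive_eqv _ _ _ _ H).
    unfold g. rewrite (HE t x (z * u) (z * v) (Omega_scale _ _ _ HO Hz)). field. lra. }
  assert (E : g 1 * / 1 = g k * / k).
  { apply (const_between (fun z => g z * / z)). intros z Hz. apply Dh.
    unfold Rmin, Rmax in Hz. destruct Rle_dec in Hz; lra. }
  unfold g in E. rewrite !Rmult_1_l in E. rewrite Rinv_1, Rmult_1_r in E.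
  rewrite E. field. lra.
Qed.

Section Int.
Variables (gamma : R) (Q : VF).
Hypothesis Hg : gamma <> 0.
Hypothesis Hall : forall V1 V2 : R -> R, smooth1 V1 -> smooth1 V2 -> in_max_Lie_alg gamma V1 V2 Q.

Local Notation xi := (vf_xi Q).
Local Notation eta := (vf_eta Q).
Local Notation theta := (vf_theta Q).
Definition Af (u v : R) := Rpower (u ^ 2 + v ^ 2) (gamma / 2).

Lemma sxi : smooth_on_Omega xi. Proof. apply (HQ gamma Q Hall). Qed.
Lemma seta : smooth_on_Omega eta. Proof. apply (HQ gamma Q Hall). Qed.
Lemma stheta : smooth_on_Omega theta. Proof. apply (HQ gamma Q Hall). Qed.

Lemma F_X t x u v : Omega u v ->
  pd4 1 xi t x u v = 0 /\ pd4 2 xi t x u v = 0 /\ pd4 3 xi t x u v = 0.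
Proof.
  intros HO. destruct (ext_X gamma Q Hall t x u v HO) as [E1 _].
  destruct (ext_X2 gamma Q Hall t x u v HO) as [E2 E3]. unfold Pt in *. auto.
Qed.
Lemma F_CR t x u v : Omega u v ->
  pd4 3 theta t x u v = pd4 2 eta t x u v /\ pd4 2 theta t x u v = - pd4 3 eta t x u v.
Proof. intros HO. destruct (ext_X gamma Q Hall t x u v HO) as [_ [E1 E2]]. unfold Pt in *. auto. Qed.
Lemma F_H t x u v : Omega u v ->
  eta t x u v = u * pd4 2 eta t x u v + v * pd4 3 eta t x u v /\
  theta t x u v = u * pd4 2 theta t x u v + v * pd4 3 theta t x u v.
Proof. intros HO. apply (ext_H gamma Q Hall t x u v HO). Qed.
Lemma F_Q t x u v : Omega u v -> pd4 2 (pd4 2 theta) t x u v = 0.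
Proof. intros HO. apply (ext_QL gamma Q Hall t x u v HO). Qed.
Lemma F_L t x u v : Omega u v ->
  pd4 2 (pd4 1 theta) t x u v + pd4 1 (pd4 2 theta) t x u v = pd4 0 xi t x u v.
Proof. intros HO. apply (ext_QL gamma Q Hall t x u v HO). Qed.

Lemma F_Z t x u v : Omega u v ->
  gamma * u * Af u v * pd4 2 eta t x u v + pd4 1 (pd4 1 eta) t x u v - pd4 0 theta t x u v = 0 /\
  gamma * v * Af u v * pd4 2 eta t x u v + pd4 0 eta t x u v + pd4 1 (pd4 1 theta) t x u v = 0.
Proof.
  intros HO. destruct (ext_Z gamma Q Hall t x u v HO) as [Z1 Z2]. unfold Pt in *.
  destruct (F_H t x u v HO) as [H1 H2]. destruct (F_CR t x u v HO) as [C1 C2].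
  destruct (dAu_eq gamma u v HO) as [D1 D2].
  assert (HO' : Omega v u) by (unfold Omega in *; lra).
  destruct (dAu_eq gamma v u HO') as [D3 _].
  rewrite D1, D3 in *. replace (v ^ 2 + u ^ 2) with (u ^ 2 + v ^ 2) in * by ring.
  unfold Aval, Af in *. rewrite <- D2 in *.
  rewrite H1, H2, C1, C2 in Z1, Z2.
  set (B := Rpower (u ^ 2 + v ^ 2) (gamma / 2 - 1)) in *.
  split; lra.
Qed.

Lemma homog_eta t x u v k : Omega u v -> 0 < k -> eta t x (k * u) (k * v) = k * eta t x u v.
Proof. apply euler_homog. apply seta. intros; apply F_H; auto. Qed.
Lemma homog_theta t x u v k : Omega u v -> 0 < k -> theta t x (k * u) (k * v) = k * theta t x u v.
Proof. apply euler_homog. apply stheta. intros; apply F_H; auto. Qed.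

Section Scale.
Variable f : fun4.
Hypothesis Hs : smooth_on_Omega f.
Hypothesis Hh : forall t x u v k, Omega u v -> 0 < k -> f t x (k * u) (k * v) = k * f t x u v.

Lemma sc_t t x u v k : Omega u v -> 0 < k -> pd4 0 f t x (k * u) (k * v) = k * pd4 0 f t x u v.
Proof.
  intros HO Hk. simpl. rewrite (Derive_ext _ (fun s => k * f s x u v)). apply Derive_scal.
  intros; apply Hh; auto.
Qed.
Lemma sc_x t x u v k : Omega u v -> 0 < k -> pd4 1 f t x (k * u) (k * v) = k * pd4 1 f t x u v.
Proof.
  intros HO Hk. simpl. rewrite (Derive_ext _ (fun s => k * f t s u v)). apply Derive_scal.
  intros; apply Hh; auto.
Qed.
Lemma sc_xx t x u v k : Omega u v -> 0 < k -> pd4 1 (pd4 1 f) t x (k * u) (k * v) = k * pd4 1 (pd4 1 f) t x u v.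
Proof.
  intros HO Hk. change (pd4 1 (pd4 1 f) t x (k * u) (k * v)) with (Derive (fun s => pd4 1 f t s (k * u) (k * v)) x).
  rewrite (Derive_ext _ (fun s => k * pd4 1 f t s u v)). apply Derive_scal.
  intros; apply sc_x; auto.
Qed.
Lemma sc_u t x u v k : Omega u v -> 0 < k -> pd4 2 f t x (k * u) (k * v) = pd4 2 f t x u v.
Proof.
  intros HO Hk. change (pd4 2 f t x (k * u) (k * v)) with (Derive (fun z => f t x z (k * v)) (k * u)).
  rewrite (Derive_ext_loc _ (fun z => k * f t x (z / k) v)).
  - rewrite Derive_scal.
    assert (HOu : Omega ((k * u) / k) v) by (replace (k * u / k) with u by (field; lra); auto).
    pose proof (chain4E f (fun _ => t) (fun _ => x) (fun z => z / k) (fun _ => v) (k * u) 0 0 (/ k) 0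
      t x u v Hs eq_refl eq_refl ltac:(cbv beta; field; lra) eq_refl HO (dR_const _ _) (dR_const _ _)
      ltac:(auto_derive; auto; field; lra) (dR_const _ _)) as H.
    rewrite (is_derive_unique (fun z : R => f t x (z / k) v) _ _ H). field. lra.
  - assert (HOk : Omega (k * u) (k * v)) by (apply Omega_scale; auto).
    apply (filter_imp (fun z => Omega z (k * v))); [|apply Omega_loc_u; auto].
    intros z Hz. replace z with (k * (z / k)) at 1 by (field; lra).
    apply Hh; auto. unfold Omega in *.
    replace ((z / k) ^ 2 + v ^ 2) with ((z ^ 2 + (k * v) ^ 2) / k ^ 2) by (field; lra).
    apply Rdiv_lt_0_compat; auto. apply pow2_gt_0; lra.
Qed.
End Scale.

Lemma Af_scale2 u v : Omega u v -> Af (2 * u) (2 * v) = Rpower 4 (gamma / 2) * Af u v.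
Proof.
  intros HO. unfold Af. rewrite Rpower_mult_distr; [|lra|auto]. f_equal. ring.
Qed.

Lemma eta_u_zero t x u v : Omega u v -> pd4 2 eta t x u v = 0.
Proof.
  intros HO.
  assert (H2 : Omega (2 * u) (2 * v)) by (apply Omega_scale; auto; lra).
  destruct (F_Z t x u v HO) as [Z1 Z2].
  destruct (F_Z t x (2 * u) (2 * v) H2) as [Z1' Z2'].
  rewrite Af_scale2 in Z1', Z2' by auto.
  rewrite (sc_u eta seta homog_eta) in Z1', Z2' by (auto; lra).
  rewrite (sc_xx eta homog_eta) in Z1' by (auto; lra).
  rewrite (sc_t theta homog_theta) in Z1' by (auto; lra).
  rewrite (sc_t eta homog_eta) in Z2' by (auto; lra).
  rewrite (sc_xx theta homog_theta) in Z2' by (auto; lra).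
  pose proof (Rpower4_ne1 gamma Hg) as Hc. set (c := Rpower 4 (gamma / 2)) in *.
  assert (HA : 0 < Af u v) by apply Rpower_pos. set (A := Af u v) in *.
  set (e := pd4 2 eta t x u v) in *.
  assert (E1 : gamma * A * (c - 1) * (u * e) = 0) by lra.
  assert (E2 : gamma * A * (c - 1) * (v * e) = 0) by lra.
  assert (Hn : gamma * A * (c - 1) <> 0).
  { apply Rmult_integral_contrapositive_currified. apply Rmult_integral_contrapositive_currified; lra. lra. }
  apply Rmult_integral in E1. apply Rmult_integral in E2.
  destruct E1 as [E1|E1]; [contradiction|]. destruct E2 as [E2|E2]; [contradiction|].
  unfold Omega in HO.
  assert (e * (u ^ 2 + v ^ 2) = 0) by (replace (e * (u ^ 2 + v ^ 2)) with (u * (u * e) + v * (v * e)) by ring; rewrite E1, E2; ring).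
  apply Rmult_integral in H. destruct H; lra.
Qed.
End Int.

Lemma ex_is (F : R -> R) z : ex_derive F z -> Derive F z = 0 -> is_derive F z 0.
Proof. intros H E. rewrite <- E. apply Derive_correct. auto. Qed.

Lemma Omega_z1 z : Omega z 1. Proof. unfold Omega. nra. Qed.
Lemma Omega_1z z : Omega 1 z. Proof. unfold Omega. nra. Qed.
Lemma Omega_u u w : u <> 0 -> Omega u w.
Proof. unfold Omega. intros. assert (0 < u ^ 2) by (apply pow2_gt_0; auto). nra. Qed.
Lemma Omega_v u w : w <> 0 -> Omega u w.
Proof. unfold Omega. intros. assert (0 < w ^ 2) by (apply pow2_gt_0; auto). nra. Qed.

Section Int2.
Variables (gamma : R) (Q : VF).
Hypothesis Hg : gamma <> 0.
Hypothesis Hall : forall V1 V2 : R -> R, smooth1 V1 -> smooth1 V2 -> in_max_Lie_alg gamma V1 V2 Q.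

Local Notation xi := (vf_xi Q).
Local Notation eta := (vf_eta Q).
Local Notation theta := (vf_theta Q).

Definition mm (t x : R) := pd4 2 theta t x 1 1.

Lemma theta_v_zero t x u v : Omega u v -> pd4 3 theta t x u v = 0.
Proof. intros HO. rewrite (proj1 (F_CR gamma Q Hall t x u v HO)). apply (eta_u_zero gamma Q Hg Hall); auto. Qed.

Lemma exs (f : fun4) i t x u v : smooth_on_Omega f -> Omega u v -> ex_pd4 i f t x u v.
Proof. intros Hs HO. apply smooth_ex; auto. Qed.

Lemma theta_line1 t x z : theta t x z 1 = mm t x * z.
Proof.
  assert (G : pd4 2 theta t x z 1 = mm t x).
  { unfold mm. apply (const_all (fun w => pd4 2 theta t x w 1)).
    intros w. apply ex_is.
    - apply (exs (pd4 2 theta) 2 t x w 1). apply smooth_pd4, (stheta gamma Q Hall). apply Omega_z1.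
    - apply (F_Q gamma Q Hall). apply Omega_z1. }
  rewrite (proj2 (F_H gamma Q Hall t x z 1 (Omega_z1 z))). rewrite G, theta_v_zero by apply Omega_z1. ring.
Qed.

Lemma theta_form t x u v : Omega u v -> theta t x u v = mm t x * u.
Proof.
  intros HO. destruct (Req_dec u 0) as [Hu|Hu].
  - subst. rewrite (proj2 (F_H gamma Q Hall t x 0 v HO)). rewrite theta_v_zero by auto. ring.
  - rewrite <- theta_line1. apply (const_all (fun w => theta t x u w)).
    intros w. apply ex_is.
    + apply (exs theta 3 t x u w). apply (stheta gamma Q Hall). apply Omega_u; auto.
    + apply theta_v_zero. apply Omega_u; auto.
Qed.

Lemma theta_u_form t x u v : v <> 0 -> pd4 2 theta t x u v = mm t x.
Proof.
  intros Hv. simpl. rewrite (Derive_ext _ (fun z => mm t x * z)).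
  apply is_derive_unique. auto_derive; auto; ring.
  intros z. apply theta_form. apply Omega_v; auto.
Qed.

Lemma eta_form t x u v : Omega u v -> eta t x u v = - mm t x * v.
Proof.
  intros HO. rewrite (proj1 (F_H gamma Q Hall t x u v HO)).
  rewrite (eta_u_zero gamma Q Hg Hall) by auto.
  destruct (Req_dec v 0) as [Hv|Hv].
  - subst. ring.
  - pose proof (proj2 (F_CR gamma Q Hall t x u v HO)) as C. rewrite theta_u_form in C by auto.
    rewrite <- (Ropp_involutive (pd4 3 eta t x u v)), <- C. ring.
Qed.

Lemma mt_zero t x : Derive (fun s => mm s x) t = 0.
Proof.
  destruct (F_Z gamma Q Hall t x 1 0 (Omega_1z 0)) as [Z1 _].
  rewrite (eta_u_zero gamma Q Hg Hall) in Z1 by apply Omega_1z.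
  assert (E1 : pd4 0 theta t x 1 0 = Derive (fun s => mm s x) t).
  { simpl. apply Derive_ext. intros s. rewrite theta_form by apply Omega_1z. ring. }
  assert (E2 : pd4 1 (pd4 1 eta) t x 1 0 = 0).
  { change (pd4 1 (pd4 1 eta) t x 1 0) with (Derive (fun y => pd4 1 eta t y 1 0) x).
    rewrite (Derive_ext _ (fun _ => 0)). apply Derive_const.
    intros y. simpl. rewrite (Derive_ext _ (fun _ => 0)). apply Derive_const.
    intros y'. rewrite eta_form by apply Omega_1z. ring. }
  rewrite E1, E2 in Z1. lra.
Qed.

Lemma mxx_zero t x : Derive (fun y => Derive (fun y' => mm t y') y) x = 0.
Proof.
  destruct (F_Z gamma Q Hall t x 0 1 (Omega_z1 0)) as [Z1 _].
  assert (E1 : pd4 0 theta t x 0 1 = 0).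
  { simpl. rewrite (Derive_ext _ (fun _ => 0)). apply Derive_const.
    intros s. rewrite theta_form by apply Omega_z1. ring. }
  assert (E2 : pd4 1 (pd4 1 eta) t x 0 1 = - Derive (fun y => Derive (fun y' => mm t y') y) x).
  { change (pd4 1 (pd4 1 eta) t x 0 1) with (Derive (fun y => pd4 1 eta t y 0 1) x).
    rewrite <- Derive_opp. apply Derive_ext. intros y. simpl.
    rewrite <- Derive_opp. apply Derive_ext. intros y'. rewrite eta_form by apply Omega_z1. ring. }
  rewrite E1, E2 in Z1. lra.
Qed.

Lemma mx_L t x : 2 * Derive (fun y => mm t y) x = pd4 0 xi t x 1 1.
Proof.
  rewrite <- (F_L gamma Q Hall t x 1 1 (Omega_z1 1)).
  assert (E : pd4 2 (pd4 1 theta) t x 1 1 = Derive (fun y => mm t y) x).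
  { change (pd4 2 (pd4 1 theta) t x 1 1) with (Derive (fun z => pd4 1 theta t x z 1) 1).
    rewrite (Derive_ext _ (fun z => z * Derive (fun y => mm t y) x)).
    apply is_derive_unique. auto_derive; auto; ring.
    intros z. simpl. rewrite (Derive_ext _ (fun y => z * mm t y)). apply Derive_scal.
    intros y. rewrite theta_line1. ring. }
  rewrite E. unfold mm. simpl. ring.
Qed.

Lemma ex_mt s x : ex_derive (fun s => mm s x) s.
Proof. apply (exs (pd4 2 theta) 0 s x 1 1). apply smooth_pd4, (stheta gamma Q Hall). apply Omega_z1. Qed.
Lemma ex_mx t y : ex_derive (fun y => mm t y) y.
Proof. apply (exs (pd4 2 theta) 1 t y 1 1). apply smooth_pd4, (stheta gamma Q Hall). apply Omega_z1. Qed.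
Lemma ex_mxx t y : ex_derive (fun y => Derive (fun y' => mm t y') y) y.
Proof. apply (exs (pd4 1 (pd4 2 theta)) 1 t y 1 1). apply smooth_pd4, smooth_pd4, (stheta gamma Q Hall). apply Omega_z1. Qed.

Definition kk := Derive (fun y => mm 0 y) 0.

Lemma m_t_const t x : mm t x = mm 0 x.
Proof. apply (const_all (fun s => mm s x)). intros z. apply ex_is. apply ex_mt. apply mt_zero. Qed.

Lemma mx_const t x : Derive (fun y => mm t y) x = kk.
Proof.
  rewrite (Derive_ext _ (fun y => mm 0 y)) by (intros; apply m_t_const).
  unfold kk. apply (const_all (fun y => Derive (fun y' => mm 0 y') y)).
  intros z. apply ex_is. apply ex_mxx. apply mxx_zero.
Qed.

Lemma m_affine t x : mm t x = mm 0 0 + kk * x.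
Proof.
  rewrite m_t_const.
  assert (E : mm 0 x - kk * x = mm 0 0 - kk * 0).
  { apply (const_all (fun y => mm 0 y - kk * y)). intros z.
    pose proof (dR_minus _ _ _ _ _ (Derive_correct _ _ (ex_mx 0 z)) (is_derive_scal (fun y => y) z kk 1 (dR_id z))) as H.
    apply (is_derive_eqv _ _ _ _ H). rewrite mx_const. ring. }
  lra.
Qed.

Lemma xi_path t x u v : Omega u v -> xi t x u v = xi t 0 1 1.
Proof.
  intros HO.
  assert (S1 : xi t x u v = xi t 0 u v).
  { apply (const_all (fun y => xi t y u v)). intros z. apply ex_is.
    apply (exs xi 1); auto. apply (sxi gamma Q Hall). apply (F_X gamma Q Hall); auto. }
  rewrite S1.
  assert (Lu : forall w a b, w <> 0 -> xi t 0 a w = xi t 0 b w).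
  { intros w a b Hw. apply (const_all (fun z => xi t 0 z w)). intros z. apply ex_is.
    apply (exs xi 2). apply (sxi gamma Q Hall). apply Omega_v; auto.
    apply (F_X gamma Q Hall). apply Omega_v; auto. }
  assert (Lv : forall w a b, w <> 0 -> xi t 0 w a = xi t 0 w b).
  { intros w a b Hw. apply (const_all (fun z => xi t 0 w z)). intros z. apply ex_is.
    apply (exs xi 3). apply (sxi gamma Q Hall). apply Omega_u; auto.
    apply (F_X gamma Q Hall). apply Omega_u; auto. }
  destruct (Req_dec v 0) as [Hv|Hv].
  - subst. assert (Hu : u <> 0) by (intro; subst; unfold Omega in HO; lra).
    rewrite (Lv u 0 1 Hu). rewrite (Lu 1 u 1) by lra. auto.
  - rewrite (Lu v u 1 Hv). rewrite (Lv 1 v 1) by lra. auto.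
Qed.

Lemma xi_form t x u v : Omega u v -> xi t x u v = xi 0 0 1 1 + 2 * kk * t.
Proof.
  intros HO. rewrite xi_path by auto.
  assert (E : xi t 0 1 1 - 2 * kk * t = xi 0 0 1 1 - 2 * kk * 0).
  { apply (const_all (fun s => xi s 0 1 1 - 2 * kk * s)). intros z.
    assert (Ex : ex_derive (fun s => xi s 0 1 1) z) by (apply (exs xi 0); [apply (sxi gamma Q Hall)|apply Omega_z1]).
    pose proof (dR_minus _ _ _ _ _ (Derive_correct _ _ Ex) (is_derive_scal (fun y => y) z (2 * kk) 1 (dR_id z))) as H.
    apply (is_derive_eqv _ _ _ _ H).
    transitivity (pd4 0 xi z 0 1 1 - 2 * kk * 1); [reflexivity|]. rewrite <- mx_L, mx_const. ring. }
  lra.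
Qed.

End Int2.

Lemma Derive_idf (t : R) : Derive (fun s => s) t = 1.
Proof. apply is_derive_unique. apply dR_id. Qed.

Lemma only_if (gamma : R) (Hg : gamma <> 0) (Q : VF) :
  (forall V1 V2 : R -> R, smooth1 V1 -> smooth1 V2 -> in_max_Lie_alg gamma V1 V2 Q) ->
  exists c1 c2 c3 : R,
    vf_eq_on_Omega Q (vf_comb c1 c2 c3 vfM (vfG (fun _ => 1)) (vfG (fun t => t))).
Proof.
  intros Hall.
  exists (mm Q 0 0), (vf_xi Q 0 0 1 1), (2 * kk Q).
  intros t x u v HO. unfold vf_comb, vfM, vfG; simpl.
  rewrite Derive_const, Derive_idf.
  rewrite (Htau gamma Q Hall t x u v HO).
  rewrite (xi_form gamma Q Hg Hall t x u v HO).
  rewrite (eta_form gamma Q Hg Hall t x u v HO).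
  rewrite (theta_form gamma Q Hg Hall t x u v HO).
  rewrite (m_affine gamma Q Hg Hall t x).
  repeat split; field.
Qed.

Lemma locally4_Omega (t x u v : R) : Omega u v ->
  locally (t, x, u, v) (fun p : R4 => Omega (snd (fst p)) (snd p)).
Proof.
  intros HO. destruct (Omega_near u v HO) as [e [He HN]].
  exists (mkposreal e He). intros [[[p0 p1] p2] p3] Hb.
  destruct Hb as [[[H0 H1] H2] H3]. simpl.
  apply HN; [apply ballR in H2 | apply ballR in H3]; auto.
Qed.

Lemma loc_slice (F G : fun4) (i : nat) t x u v :
  (forall t x u v, Omega u v -> F t x u v = G t x u v) -> Omega u v ->
  match i with
  | O => locally t (fun s => F s x u v = G s x u v)
  | 1%nat => locally x (fun s => F t s u v = G t s u v)
  | 2%nat => locally u (fun s => F t x s v = G t x s v)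
  | _ => locally v (fun s => F t x u s = G t x u s)
  end.
Proof.
  intros HE HO. destruct i as [|[|[|i]]].
  - apply filter_forall. intros; apply HE; auto.
  - apply filter_forall. intros; apply HE; auto.
  - apply (filter_imp _ _ (fun s Hs => HE _ _ _ _ Hs) (Omega_loc_u u v HO)).
  - apply (filter_imp _ _ (fun s Hs => HE _ _ _ _ Hs) (Omega_loc_v u v HO)).
Qed.

Lemma pd4_eq (F G : fun4) (i : nat) :
  (forall t x u v, Omega u v -> F t x u v = G t x u v) ->
  forall t x u v, Omega u v -> pd4 i F t x u v = pd4 i G t x u v.
Proof.
  intros HE t x u v HO. pose proof (loc_slice F G i t x u v HE HO) as L.
  destruct i as [|[|[|i]]]; simpl; apply Derive_ext_loc; auto.
Qed.

Lemma ex_pd4_eq (F G : fun4) (i : nat) :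
  (forall t x u v, Omega u v -> F t x u v = G t x u v) ->
  forall t x u v, Omega u v -> ex_pd4 i G t x u v -> ex_pd4 i F t x u v.
Proof.
  intros HE t x u v HO. pose proof (loc_slice G F i t x u v (fun a b c d H => eq_sym (HE a b c d H)) HO) as L.
  destruct i as [|[|[|i]]]; simpl; apply ex_derive_ext_loc; auto.
Qed.

Lemma iter_eq (F G : fun4) (ds : list nat) :
  (forall t x u v, Omega u v -> F t x u v = G t x u v) ->
  forall t x u v, Omega u v -> iter_pd4 ds F t x u v = iter_pd4 ds G t x u v.
Proof.
  intros HE. induction ds as [|i ds IH]; simpl; auto.
  apply pd4_eq. auto.
Qed.

Lemma smooth_ext_Omega (F G : fun4) :
  (forall t x u v, Omega u v -> F t x u v = G t x u v) -> smooth_on_Omega G -> smooth_on_Omega F.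
Proof.
  intros HE HG ds t x u v HO. destruct (HG ds t x u v HO) as [H1 H2]. split.
  - intros i. apply (ex_pd4_eq _ _ i (iter_eq F G ds HE)); auto.
  - apply (continuous_ext_loc _ (fun p : R4 => iter_pd4 ds G (fst (fst (fst p))) (snd (fst (fst p))) (snd (fst p)) (snd p))); auto.
    generalize (locally4_Omega t x u v HO). apply filter_imp.
    intros [[[p0 p1] p2] p3] Hp. simpl in *. symmetry. apply iter_eq; auto.
Qed.

Definition poly4 (k0 k1 k2 k3 k4 k5 k6 : R) : fun4 :=
  fun t x u v => k0 + k1 * t + k2 * x + k3 * u + k4 * v + k5 * x * u + k6 * x * v.

Lemma pd4_poly4 i k0 k1 k2 k3 k4 k5 k6 : exists a0 a1 a2 a3 a4 a5 a6,
  pd4 i (poly4 k0 k1 k2 k3 k4 k5 k6) = poly4 a0 a1 a2 a3 a4 a5 a6.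
Proof.
  destruct i as [|[|[|i]]].
  - exists k1, 0, 0, 0, 0, 0, 0. repeat (apply functional_extensionality; intro).
    simpl. apply is_derive_unique. unfold poly4. auto_derive; auto; ring.
  - exists k2, 0, 0, k5, k6, 0, 0. repeat (apply functional_extensionality; intro).
    simpl. apply is_derive_unique. unfold poly4. auto_derive; auto; ring.
  - exists k3, 0, k5, 0, 0, 0, 0. repeat (apply functional_extensionality; intro).
    simpl. apply is_derive_unique. unfold poly4. auto_derive; auto; ring.
  - exists k4, 0, k6, 0, 0, 0, 0. repeat (apply functional_extensionality; intro).
    simpl. apply is_derive_unique. unfold poly4. auto_derive; auto; ring.
Qed.

Lemma iter_poly4 ds k0 k1 k2 k3 k4 k5 k6 : exists a0 a1 a2 a3 a4 a5 a6,
  iter_pd4 ds (poly4 k0 k1 k2 k3 k4 k5 k6) = poly4 a0 a1 a2 a3 a4 a5 a6.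
Proof.
  induction ds as [|i ds IH]; simpl.
  - exists k0, k1, k2, k3, k4, k5, k6; auto.
  - destruct IH as [a0 [a1 [a2 [a3 [a4 [a5 [a6 E]]]]]]]. rewrite E. apply pd4_poly4.
Qed.

Lemma smooth_poly4 k0 k1 k2 k3 k4 k5 k6 : smooth_on_Omega (poly4 k0 k1 k2 k3 k4 k5 k6).
Proof.
  intros ds t x u v HO. destruct (iter_poly4 ds k0 k1 k2 k3 k4 k5 k6) as [a0 [a1 [a2 [a3 [a4 [a5 [a6 E]]]]]]].
  rewrite E. split.
  - intros [|[|[|i]]]; simpl; unfold poly4; auto_derive; auto.
  - unfold poly4. repeat apply cR_plus; repeat apply cR_mult; try apply cR_const;
    try apply c4_0; try apply c4_1; try apply c4_2; try apply c4_3.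
Qed.

Section IfDir.
Variables (c1 c2 c3 : R) (Q : VF).
Hypothesis HE : vf_eq_on_Omega Q (vf_comb c1 c2 c3 vfM (vfG (fun _ => 1)) (vfG (fun t => t))).

Lemma Q_tau t x u v : Omega u v -> vf_tau Q t x u v = 0.
Proof. intros HO. destruct (HE t x u v HO) as [E _]. rewrite E. simpl. ring. Qed.
Lemma Q_xi t x u v : Omega u v -> vf_xi Q t x u v = c2 + c3 * t.
Proof. intros HO. destruct (HE t x u v HO) as [_ [E _]]. rewrite E. simpl. ring. Qed.
Lemma Q_eta t x u v : Omega u v -> vf_eta Q t x u v = - (c1 + c3 / 2 * x) * v.
Proof. intros HO. destruct (HE t x u v HO) as [_ [_ [E _]]]. rewrite E. simpl.
  rewrite Derive_const, Derive_idf. field. Qed.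
Lemma Q_theta t x u v : Omega u v -> vf_theta Q t x u v = (c1 + c3 / 2 * x) * u.
Proof. intros HO. destruct (HE t x u v HO) as [_ [_ [_ E]]]. rewrite E. simpl.
  rewrite Derive_const, Derive_idf. field. Qed.

Lemma Q_smooth : smooth_VF Q.
Proof.
  unfold smooth_VF. split; [|split; [|split]].
  - apply (smooth_ext_Omega _ (poly4 0 0 0 0 0 0 0)); [|apply smooth_poly4].
    intros. rewrite Q_tau by auto. unfold poly4. ring.
  - apply (smooth_ext_Omega _ (poly4 c2 c3 0 0 0 0 0)); [|apply smooth_poly4].
    intros. rewrite Q_xi by auto. unfold poly4. ring.
  - apply (smooth_ext_Omega _ (poly4 0 0 0 0 (- c1) 0 (- (c3 / 2)))); [|apply smooth_poly4].
    intros. rewrite Q_eta by auto. unfold poly4. ring.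
  - apply (smooth_ext_Omega _ (poly4 0 0 0 c1 0 (c3 / 2) 0)); [|apply smooth_poly4].
    intros. rewrite Q_theta by auto. unfold poly4. ring.
Qed.
End IfDir.

Section IfCrit.
Variables (c1 c2 c3 : R) (Q : VF).
Hypothesis HE : vf_eq_on_Omega Q (vf_comb c1 c2 c3 vfM (vfG (fun _ => 1)) (vfG (fun t => t))).
Variables (U W : R -> R -> R) (t x : R).
Hypothesis HU : smooth2 U.
Hypothesis HW : smooth2 W.
Hypothesis HO : Omega (U t x) (W t x).

Definition mu (y : R) := c1 + c3 / 2 * y.

Lemma exS_t (Z : R -> R -> R) : smooth2 Z -> ex_derive (fun s => Z s x) t.
Proof. intros H. apply (proj1 (H nil t x) 0%nat). Qed.
Lemma exS_x (Z : R -> R -> R) y : smooth2 Z -> ex_derive (fun s => Z t s) y.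
Proof. intros H. apply (proj1 (H nil t y) 1%nat). Qed.
Lemma exS_xx (Z : R -> R -> R) : smooth2 Z -> ex_derive (fun s => d_x Z t s) x.
Proof. intros H. apply (proj1 (H (1%nat :: nil) t x) 1%nat). Qed.

Lemma dS_x (Z : R -> R -> R) y : smooth2 Z -> is_derive (fun s => Z t s) y (d_x Z t y).
Proof. intros; apply Derive_correct; apply exS_x; auto. Qed.
Lemma dS_t (Z : R -> R -> R) : smooth2 Z -> is_derive (fun s => Z s x) t (d_t Z t x).
Proof. intros; apply Derive_correct; apply exS_t; auto. Qed.
Lemma dS_xx (Z : R -> R -> R) : smooth2 Z -> is_derive (fun s => d_x Z t s) x (d_x (d_x Z) t x).
Proof. intros; apply Derive_correct; apply exS_xx; auto. Qed.

Lemma cont_ex (f : R -> R) y : ex_derive f y -> continuous f y.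
Proof. apply (ex_derive_continuous (K:=R_AbsRing) (V:=R_NormedModule)). Qed.

Lemma lX : locally x (fun y => Omega (U t y) (W t y)).
Proof. apply Omega_curve; auto; apply cont_ex, exS_x; auto. Qed.
Lemma lT : locally t (fun s => Omega (U s x) (W s x)).
Proof. apply Omega_curve; auto; apply cont_ex, exS_t; auto. Qed.
Lemma lXX : locally x (fun y => locally y (fun z => Omega (U t z) (W t z))).
Proof. apply locally_locally, lX. Qed.

Lemma Dloc (f g : R -> R) y l : locally y (fun z => f z = g z) -> is_derive g y l -> Derive f y = l.
Proof. intros L H. rewrite (Derive_ext_loc f g y L). apply is_derive_unique; auto. Qed.

Lemma v_tau0 : tauS Q U W t x = 0.
Proof. unfold tauS, along. apply (Q_tau c1 c2 c3 Q HE); auto. Qed.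
Lemma v_dt_tau : d_t (tauS Q U W) t x = 0.
Proof.
  unfold d_t, tauS, along. apply (Dloc _ (fun _ => 0)); [|apply dR_const].
  apply (filter_imp _ _ (fun s Hs => Q_tau c1 c2 c3 Q HE _ _ _ _ Hs) lT).
Qed.
Lemma v_dx_tau_loc : locally x (fun y => d_x (tauS Q U W) t y = 0).
Proof.
  generalize lXX; apply filter_imp; intros y Hy.
  unfold d_x, tauS, along. apply (Dloc _ (fun _ => 0)); [|apply dR_const].
  apply (filter_imp _ _ (fun s Hs => Q_tau c1 c2 c3 Q HE _ _ _ _ Hs) Hy).
Qed.
Lemma v_dt_xi : d_t (xiS Q U W) t x = c3.
Proof.
  unfold d_t, xiS, along. apply (Dloc _ (fun s => c2 + c3 * s)); [|auto_derive; auto; ring].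
  apply (filter_imp _ _ (fun s Hs => Q_xi c1 c2 c3 Q HE _ _ _ _ Hs) lT).
Qed.
Lemma v_dx_xi_loc : locally x (fun y => d_x (xiS Q U W) t y = 0).
Proof.
  generalize lXX; apply filter_imp; intros y Hy.
  unfold d_x, xiS, along. apply (Dloc _ (fun _ => c2 + c3 * t)); [|apply dR_const].
  apply (filter_imp _ _ (fun s Hs => Q_xi c1 c2 c3 Q HE _ _ _ _ Hs) Hy).
Qed.
Lemma v_dt_eta : d_t (along (vf_eta Q) U W) t x = - mu x * d_t W t x.
Proof.
  unfold d_t, along. apply (Dloc _ (fun s => - mu x * W s x)).
  - generalize lT; apply filter_imp; intros s Hs. rewrite (Q_eta c1 c2 c3 Q HE) by auto. unfold mu. ring.
  - apply is_derive_scal. apply dS_t; auto.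
Qed.
Lemma v_dt_theta : d_t (along (vf_theta Q) U W) t x = mu x * d_t U t x.
Proof.
  unfold d_t, along. apply (Dloc _ (fun s => mu x * U s x)).
  - generalize lT; apply filter_imp; intros s Hs. rewrite (Q_theta c1 c2 c3 Q HE) by auto. unfold mu. ring.
  - apply is_derive_scal. apply dS_t; auto.
Qed.

Lemma v_dx_eta_loc : locally x (fun y => d_x (along (vf_eta Q) U W) t y = - (c3 / 2) * W t y - mu y * d_x W t y).
Proof.
  generalize lXX; apply filter_imp; intros y Hy.
  unfold along. unfold d_x at 1. apply (Dloc _ (fun z => - mu z * W t z)).
  - generalize Hy; apply filter_imp; intros s Hs. rewrite (Q_eta c1 c2 c3 Q HE) by auto. unfold mu. ring.
  - assert (Hm : is_derive (fun z => - mu z) y (- (c3 / 2))) by (unfold mu; auto_derive; auto; ring).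
    pose proof (dR_mult _ _ _ _ _ Hm (dS_x W y HW)) as H.
    apply (is_derive_eqv _ _ _ _ H). ring.
Qed.
Lemma v_dx_theta_loc : locally x (fun y => d_x (along (vf_theta Q) U W) t y = (c3 / 2) * U t y + mu y * d_x U t y).
Proof.
  generalize lXX; apply filter_imp; intros y Hy.
  unfold along. unfold d_x at 1. apply (Dloc _ (fun z => mu z * U t z)).
  - generalize Hy; apply filter_imp; intros s Hs. rewrite (Q_theta c1 c2 c3 Q HE) by auto. unfold mu. ring.
  - assert (Hm : is_derive (fun z => mu z) y (c3 / 2)) by (unfold mu; auto_derive; auto; ring).
    pose proof (dR_mult _ _ _ _ _ Hm (dS_x U y HU)) as H.
    apply (is_derive_eqv _ _ _ _ H). ring.
Qed.

Lemma v_prol_xx_eta : prol_xx Q U W (vf_eta Q) U t x = - c3 * d_x W t x - mu x * d_x (d_x W) t x.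
Proof.
  unfold prol_xx. rewrite (locally_singleton _ _ v_dx_tau_loc), (locally_singleton _ _ v_dx_xi_loc).
  unfold d_x at 1. rewrite (Dloc _ (fun y => - (c3 / 2) * W t y - mu y * d_x W t y) x (- c3 * d_x W t x - mu x * d_x (d_x W) t x)).
  ring.
  - pose proof (filter_and _ _ (filter_and _ _ v_dx_eta_loc v_dx_tau_loc) v_dx_xi_loc) as L.
    revert L. apply filter_imp. intros y [[H1 H2] H3]. unfold prol_x. rewrite H1, H2, H3. ring.
  - assert (Hm : is_derive (fun z => mu z) x (c3 / 2)) by (unfold mu; auto_derive; auto; ring).
    pose proof (dR_minus _ _ _ _ _ (is_derive_scal _ _ (- (c3 / 2)) _ (dS_x W x HW))
                  (dR_mult _ _ _ _ _ Hm (dS_xx W HW))) as H.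
    apply (is_derive_eqv _ _ _ _ H). field.
Qed.
Lemma v_prol_xx_theta : prol_xx Q U W (vf_theta Q) W t x = c3 * d_x U t x + mu x * d_x (d_x U) t x.
Proof.
  unfold prol_xx. rewrite (locally_singleton _ _ v_dx_tau_loc), (locally_singleton _ _ v_dx_xi_loc).
  unfold d_x at 1. rewrite (Dloc _ (fun y => (c3 / 2) * U t y + mu y * d_x U t y) x (c3 * d_x U t x + mu x * d_x (d_x U) t x)).
  ring.
  - pose proof (filter_and _ _ (filter_and _ _ v_dx_theta_loc v_dx_tau_loc) v_dx_xi_loc) as L.
    revert L. apply filter_imp. intros y [[H1 H2] H3]. unfold prol_x. rewrite H1, H2, H3. ring.
  - assert (Hm : is_derive (fun z => mu z) x (c3 / 2)) by (unfold mu; auto_derive; auto; ring).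
    pose proof (dR_plus _ _ _ _ _ (is_derive_scal _ _ (c3 / 2) _ (dS_x U x HU))
                  (dR_mult _ _ _ _ _ Hm (dS_xx U HU))) as H.
    apply (is_derive_eqv _ _ _ _ H). field.
Qed.

Lemma v_prol_t_eta : prol_t Q U W (vf_eta Q) U t x = - mu x * d_t W t x - d_x U t x * c3.
Proof. unfold prol_t. rewrite v_dt_eta, v_dt_tau, v_dt_xi. ring. Qed.
Lemma v_prol_t_theta : prol_t Q U W (vf_theta Q) W t x = mu x * d_t U t x - d_x W t x * c3.
Proof. unfold prol_t. rewrite v_dt_theta, v_dt_tau, v_dt_xi. ring. Qed.

Lemma if_crit (gamma : R) (V1 V2 : R -> R) :
  NLS_E1 gamma V1 V2 (jet2 U W t x) = 0 -> NLS_E2 gamma V1 V2 (jet2 U W t x) = 0 ->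
  prol2_apply Q U W (NLS_E1 gamma V1 V2) t x = 0 /\ prol2_apply Q U W (NLS_E2 gamma V1 V2) t x = 0.
Proof.
  intros H1 H2.
  assert (HOj : Omega (jet2 U W t x 2%nat) (jet2 U W t x 3%nat)) by exact HO.
  assert (Ea : along (vf_eta Q) U W t x = - mu x * W t x).
  { unfold along. rewrite (Q_eta c1 c2 c3 Q HE) by auto. unfold mu. ring. }
  assert (Eb : along (vf_theta Q) U W t x = mu x * U t x).
  { unfold along. rewrite (Q_theta c1 c2 c3 Q HE) by auto. unfold mu. ring. }
  split.
  - unfold prol2_apply. rewrite sum10. unfold prol2. rewrite v_tau0.
    rewrite (pdJ1_1 gamma V1 V2), (pdJ1_2 gamma V1 V2 _ HOj), (pdJ1_3 gamma V1 V2 _ HOj), pdJ1_4, pdJ1_5,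
      pdJ1_6, pdJ1_7, pdJ1_8, pdJ1_9.
    rewrite v_prol_t_theta, v_prol_xx_eta, Ea, Eb.
    transitivity (- mu x * NLS_E2 gamma V1 V2 (jet2 U W t x)); [|rewrite H2; ring].
    unfold NLS_E2, absg, dAu, jet2.
    replace (W t x ^ 2 + U t x ^ 2) with (U t x ^ 2 + W t x ^ 2) by ring. ring.
  - unfold prol2_apply. rewrite sum10. unfold prol2. rewrite v_tau0.
    rewrite (pdJ2_1 gamma V1 V2), (pdJ2_2 gamma V1 V2 _ HOj), (pdJ2_3 gamma V1 V2 _ HOj), pdJ2_4, pdJ2_5,
      pdJ2_6, pdJ2_7, pdJ2_8, pdJ2_9.
    rewrite v_prol_t_eta, v_prol_xx_theta, Ea, Eb.
    transitivity (mu x * NLS_E1 gamma V1 V2 (jet2 U W t x)); [|rewrite H1; ring].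
    unfold NLS_E1, absg, dAu, jet2.
    replace (W t x ^ 2 + U t x ^ 2) with (U t x ^ 2 + W t x ^ 2) by ring. ring.
Qed.
End IfCrit.

Lemma if_dir (gamma : R) (Q : VF) :
  (exists c1 c2 c3 : R,
    vf_eq_on_Omega Q (vf_comb c1 c2 c3 vfM (vfG (fun _ => 1)) (vfG (fun t => t)))) ->
  forall V1 V2 : R -> R, smooth1 V1 -> smooth1 V2 -> in_max_Lie_alg gamma V1 V2 Q.
Proof.
  intros [c1 [c2 [c3 HE]]] V1 V2 _ _. split.
  - apply (Q_smooth c1 c2 c3 Q HE).
  - intros U W t x HU HW HO H1 H2. apply (if_crit c1 c2 c3 Q HE U W t x HU HW HO); auto.
Qed.

Theorem lemma2 (gamma : R) (Hgamma : gamma <> 0) (Q : VF) :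
  (forall V1 V2 : R -> R, smooth1 V1 -> smooth1 V2 -> in_max_Lie_alg gamma V1 V2 Q)
  <->
  exists c1 c2 c3 : R,
    vf_eq_on_Omega Q (vf_comb c1 c2 c3 vfM (vfG (fun _ => 1)) (vfG (fun t => t))).
Proof.
  split.
  - apply only_if; auto.
  - apply if_dir.
Qed.
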